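(* Let $\mathcal C$ be a category in which finite inverse limits exist. (1) If $P_\bullet$ is a multiplicative oversimplicial object of $\mathcal C$, then $(P_1,P_0,s,t,e,\mu,\iota)$ is a groupoid in $\mathcal C$, where $s,t\colon P_1\to P_0$ are induced by the maps $[0]\to[0,1]$ sending $0$ to $0$ and to $1$ respectively, $e\colon P_0\to P_1$ by the unique map $[0,1]\to[0]$, $\iota\colon P_1\to P_1$ by the map $[0,1]\to[0,1]$ exchanging $0$ and $1$, and $\mu\colon P_1\times_{P_0}P_1\to P_1$ is the composition of the inverse of the isomorphism $P_2\to P_1\times_{P_0}P_1$ (induced by the inclusion $[0,1]\to[0,2]$ and the map $[0,1]\to[0,2]$, $i\mapsto i+1$) with the map $P_2\to P_1$ induced by $[0,1]\to[0,2]$, $0\mapsto 0$, $1\mapsto 2$. (2) The functor from the full subcategory of multiplicative oversimplicial objects of $\mathcal C$ to the category of groupoids in $\mathcal C$ given by the construction in (1) is an equivalence of categories. It induces an equivalence between the full subcategory of strictly multiplicative oversimplicial objects and the full subcategory of groups in $\mathcal C$ (groupoids with $s=t$).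
   Context: Let $\widetilde\Delta$ be the full subcategory of the category of sets whose objects are $[0,n]=\{0,1,\dots,n\}$, $n\ge0$ (all maps of sets allowed). An oversimplicial object of $\mathcal C$ is a contravariant functor $P\colon\widetilde\Delta\to\mathcal C$, $P_n=P([0,n])$. An additive cocartesian diagram is a pushout square in $\widetilde\Delta$ with maps $[0]\to[0,m]$, $[0]\to[0,l]$, $[0,m]\to[0,n]$, $[0,l]\to[0,n]$. $P$ is multiplicative if for every such diagram $P_n\to P_m\times_{P_0}P_l$ is an isomorphism; it is strictly multiplicative if moreover the two morphisms $P_1\to P_0$ (induced by the two maps $[0]\to[0,1]$) are equal. A groupoid in $\mathcal C$ is a 7-tuple $(P,S,s,t,e,\mu,\iota)$ of objects $P,S$ and morphisms $s,t\colon P\to S$, $e\colon S\to P$, $\mu\colon P\times_SP\to P$ (fiber product via $t$ on the first factor and $s$ on the second), $\iota\colon P\to P$, such that $\mu$ is associative, $e$ is a two-sided unit ($\mu\circ((e\circ s)\times\mathrm{id})=\mathrm{id}=\mu\circ(\mathrm{id}\times(e\circ t))$) and $\iota$ is an inverse ($\mu\circ(\mathrm{id}\times\iota)=e\circ s$, $\mu\circ(\iota\times\mathrm{id})=e\circ t$). It is a group if $s=t$. *)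

(* Defs.v *)
From mathcomp Require Import all_boot.
From Stdlib Require Import ClassicalEpsilon ProofIrrelevance FunctionalExtensionality.

Set Implicit Arguments.
Unset Strict Implicit.
Unset Printing Implicit Defensive.

Record Category := Cat {
  Ob :> Type;
  Hom : Ob -> Ob -> Type;
  idm : forall A, Hom A A;
  comp : forall A B C, Hom B C -> Hom A B -> Hom A C;
  comp_idl : forall A B (f : Hom A B), comp (idm B) f = f;
  comp_idr : forall A B (f : Hom A B), comp f (idm A) = f;
  comp_assoc : forall A B C D (h : Hom C D) (g : Hom B C) (f : Hom A B),
      comp h (comp g f) = comp (comp h g) f }.

Arguments Hom {_} _ _.
Arguments idm {_} _.
Arguments comp {_ _ _ _} _ _.
Arguments comp_idl {_ _ _} _.
Arguments comp_idr {_ _ _} _.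
Arguments comp_assoc {_ _ _ _ _} _ _ _.

Notation "g ⊙ f" := (comp g f) (at level 40, left associativity).

Definition is_iso (C : Category) (A B : C) (f : Hom A B) : Prop :=
  exists g : Hom B A, g ⊙ f = idm A /\ f ⊙ g = idm B.

Definition iso_inv (C : Category) (A B : C) (f : Hom A B) (h : is_iso f) : Hom B A :=
  proj1_sig (constructive_indefinite_description _ h).

(* A category with (chosen) finite inverse limits: a terminal object and
   fiber products (pullbacks). *)
Record FinLimCategory := FLCat {
  flcat :> Category;
  term : Ob flcat;
  term_map : forall X : Ob flcat, Hom X term;
  term_uniq : forall (X : Ob flcat) (u v : Hom X term), u = v;
  pb : forall X Y Z : Ob flcat, Hom X Z -> Hom Y Z -> Ob flcat;
  pb1 : forall (X Y Z : Ob flcat) (f : Hom X Z) (g : Hom Y Z), Hom (pb f g) X;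
  pb2 : forall (X Y Z : Ob flcat) (f : Hom X Z) (g : Hom Y Z), Hom (pb f g) Y;
  pb_comm : forall (X Y Z : Ob flcat) (f : Hom X Z) (g : Hom Y Z),
      f ⊙ pb1 f g = g ⊙ pb2 f g;
  pb_pair : forall (X Y Z : Ob flcat) (f : Hom X Z) (g : Hom Y Z) (W : Ob flcat)
      (h : Hom W X) (k : Hom W Y), f ⊙ h = g ⊙ k -> Hom W (pb f g);
  pb_pair1 : forall (X Y Z : Ob flcat) (f : Hom X Z) (g : Hom Y Z) (W : Ob flcat)
      (h : Hom W X) (k : Hom W Y) (e : f ⊙ h = g ⊙ k), pb1 f g ⊙ pb_pair e = h;
  pb_pair2 : forall (X Y Z : Ob flcat) (f : Hom X Z) (g : Hom Y Z) (W : Ob flcat)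
      (h : Hom W X) (k : Hom W Y) (e : f ⊙ h = g ⊙ k), pb2 f g ⊙ pb_pair e = k;
  pb_uniq : forall (X Y Z : Ob flcat) (f : Hom X Z) (g : Hom Y Z) (W : Ob flcat)
      (u v : Hom W (pb f g)),
      pb1 f g ⊙ u = pb1 f g ⊙ v -> pb2 f g ⊙ u = pb2 f g ⊙ v -> u = v }.

Arguments term {_}.
Arguments pb {_ _ _ _} _ _.
Arguments pb1 {_ _ _ _} _ _.
Arguments pb2 {_ _ _ _} _ _.
Arguments pb_comm {_ _ _ _} _ _.
Arguments pb_pair {_ _ _ _ _ _ _ _ _} _.
Arguments pb_pair1 {_ _ _ _ _ _ _ _ _} _.
Arguments pb_pair2 {_ _ _ _ _ _ _ _ _} _.
Arguments pb_uniq {_ _ _ _ _ _ _} _ _ _ _.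

Lemma pb_pair_comp (C : FinLimCategory) (X Y Z W V : C) (f : Hom X Z) (g : Hom Y Z)
  (h : Hom W X) (k : Hom W Y) (e : f ⊙ h = g ⊙ k) (m : Hom V W)
  (e' : f ⊙ (h ⊙ m) = g ⊙ (k ⊙ m)) :
  pb_pair e ⊙ m = pb_pair e'.
Proof.
apply: pb_uniq; by rewrite comp_assoc ?pb_pair1 ?pb_pair2.
Qed.

Lemma pb_pair_ext (C : FinLimCategory) (X Y Z W : C) (f : Hom X Z) (g : Hom Y Z)
  (h h' : Hom W X) (k k' : Hom W Y) (e : f ⊙ h = g ⊙ k) (e' : f ⊙ h' = g ⊙ k') :
  h = h' -> k = k' -> pb_pair e = pb_pair e'.
Proof. by move=> Hh Hk; apply: pb_uniq; rewrite ?pb_pair1 ?pb_pair2. Qed.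

(* Oversimplicial objects: contravariant functors on Δ~, the full      *)
(* subcategory of Set on the [0,n] = 'I_n.+1, all maps of sets allowed. *)

Record OS (C : Category) := MkOS {
  os_ob :> nat -> Ob C;
  os_map : forall m n : nat, ('I_m.+1 -> 'I_n.+1) -> Hom (os_ob n) (os_ob m);
  os_id : forall n : nat, os_map (@id 'I_n.+1) = idm (os_ob n);
  os_comp : forall (k m n : nat) (f : 'I_k.+1 -> 'I_m.+1) (g : 'I_m.+1 -> 'I_n.+1),
      os_map (g \o f) = os_map f ⊙ os_map g }.

Arguments os_map {C} _ {m n} _.

(* Pushout squares in Δ~ of the shape [0] -> [0,m], [0] -> [0,l],
   [0,m] -> [0,n], [0,l] -> [0,n] (additive cocartesian diagrams). *)
Definition is_pushout_D (m l n : nat) (a : 'I_1 -> 'I_m.+1) (b : 'I_1 -> 'I_l.+1)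
    (f : 'I_m.+1 -> 'I_n.+1) (g : 'I_l.+1 -> 'I_n.+1) : Prop :=
  f \o a =1 g \o b /\
  forall (k : nat) (u : 'I_m.+1 -> 'I_k.+1) (v : 'I_l.+1 -> 'I_k.+1),
    u \o a =1 v \o b ->
    exists w : 'I_n.+1 -> 'I_k.+1,
      (w \o f =1 u /\ w \o g =1 v) /\
      forall w' : 'I_n.+1 -> 'I_k.+1, w' \o f =1 u -> w' \o g =1 v -> w' =1 w.

Lemma os_square (C : Category) (P : OS C) (m l n : nat) (a : 'I_1 -> 'I_m.+1)
  (b : 'I_1 -> 'I_l.+1) (f : 'I_m.+1 -> 'I_n.+1) (g : 'I_l.+1 -> 'I_n.+1) :
  f \o a =1 g \o b -> os_map P a ⊙ os_map P f = os_map P b ⊙ os_map P g.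
Proof.
move=> H; rewrite -!os_comp; congr (os_map P _); exact: functional_extensionality H.
Qed.

Definition multiplicative (C : FinLimCategory) (P : OS C) : Prop :=
  forall (m l n : nat) (a : 'I_1 -> 'I_m.+1) (b : 'I_1 -> 'I_l.+1)
    (f : 'I_m.+1 -> 'I_n.+1) (g : 'I_l.+1 -> 'I_n.+1) (H : is_pushout_D a b f g),
    is_iso (pb_pair (os_square P (proj1 H))).

Definition s_map : 'I_1 -> 'I_2 := fun _ => ord0.
Definition t_map : 'I_1 -> 'I_2 := fun _ => ord_max.
Definition e_map : 'I_2 -> 'I_1 := fun _ => ord0.
Definition i_map : 'I_2 -> 'I_2 := fun i => rev_ord i.
Definition incl_map : 'I_2 -> 'I_3 := fun i => widen_ord (leqnSn 2) i.
Definition shift_map : 'I_2 -> 'I_3 := fun i => lift ord0 i.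
Definition d_map : 'I_2 -> 'I_3 := fun i => inord (i * 2).

Definition strictly_multiplicative (C : FinLimCategory) (P : OS C) : Prop :=
  multiplicative P /\ os_map P s_map = os_map P t_map.

Lemma sq_pushout : is_pushout_D t_map s_map incl_map shift_map.
Proof.
split; first by move=> i; apply: val_inj.
move=> k u v huv.
exists (fun j : 'I_3 => if (j <= 1)%N then u (inord j) else v (inord j.-1)).
split; first split.
- move=> i /=; have := ltn_ord i; rewrite ltnS => ->.
  by congr u; apply: val_inj; rewrite /= inordK.
- case=> [[|[|i]] Hi] //=.
  + have := huv ord0; rewrite /s_map /t_map /= => H.
    have -> : Ordinal Hi = ord0 by apply: val_inj.
    rewrite -H; congr u; apply: val_inj; by rewrite /= inordK.
  + congr v; apply: val_inj; by rewrite /= inordK.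
- move=> w' h1 h2 [[|[|[|j]]] Hj] //=.
  + have -> : inord 0 = ord0 :> 'I_2 by apply: val_inj; rewrite /= inordK.
    rewrite -(h1 ord0) /=; congr w'; exact: val_inj.
  + have -> : inord 1 = ord_max :> 'I_2 by apply: val_inj; rewrite /= inordK.
    rewrite -(h1 ord_max) /=; congr w'; exact: val_inj.
  + have -> : inord 1 = ord_max :> 'I_2 by apply: val_inj; rewrite /= inordK.
    rewrite -(h2 ord_max) /=; congr w'; exact: val_inj.
Qed.

Record GrpdData (C : FinLimCategory) := MkGD {
  gP : Ob C;
  gS : Ob C;
  gs : Hom gP gS;
  gt : Hom gP gS;
  ge : Hom gS gP;
  gmu : Hom (pb gt gs) gP;
  gi : Hom gP gP }.

Arguments MkGD {C} _ _ _ _ _ _ _.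

(* Besides associativity, unit and inverse laws (stated
   with the pairings (e∘s) x id, id x (e∘t), id x ι, ι x id, μ x id, id x μ
   into the fiber products), we include the source/target compatibilities
   which are needed for those pairings to be defined. *)
Definition is_groupoid (C : FinLimCategory) (G : GrpdData C) : Prop :=
  let s := gs G in let t := gt G in let e := ge G in
  let mu := gmu G in let i := gi G in
  let p1 := pb1 t s in let p2 := pb2 t s in
  let r1 := pb1 (t ⊙ p2) s in let r2 := pb2 (t ⊙ p2) s in
  (s ⊙ e = idm (gS G) /\ t ⊙ e = idm (gS G) /\
   s ⊙ mu = s ⊙ p1 /\ t ⊙ mu = t ⊙ p2 /\
   s ⊙ i = t /\ t ⊙ i = s) /\
  (* associativity: mu ∘ (mu x id) = mu ∘ (id x mu) on (P x_S P) x_S P *)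
  (forall (h1 : t ⊙ (mu ⊙ r1) = s ⊙ r2) (hyz : t ⊙ (p2 ⊙ r1) = s ⊙ r2)
          (h2 : t ⊙ (p1 ⊙ r1) = s ⊙ (mu ⊙ pb_pair hyz)),
      mu ⊙ pb_pair h1 = mu ⊙ pb_pair h2) /\
  (forall h : t ⊙ (e ⊙ s) = s ⊙ idm (gP G), mu ⊙ pb_pair h = idm (gP G)) /\
  (forall h : t ⊙ idm (gP G) = s ⊙ (e ⊙ t), mu ⊙ pb_pair h = idm (gP G)) /\
  (forall h : t ⊙ idm (gP G) = s ⊙ i, mu ⊙ pb_pair h = e ⊙ s) /\
  (forall h : t ⊙ i = s ⊙ idm (gP G), mu ⊙ pb_pair h = e ⊙ t).

Definition is_group (C : FinLimCategory) (G : GrpdData C) : Prop :=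
  is_groupoid G /\ gs G = gt G.

Definition is_gd_hom (C : FinLimCategory) (G G' : GrpdData C)
    (fP : Hom (gP G) (gP G')) (fS : Hom (gS G) (gS G')) : Prop :=
  gs G' ⊙ fP = fS ⊙ gs G /\
  gt G' ⊙ fP = fS ⊙ gt G /\
  ge G' ⊙ fS = fP ⊙ ge G /\
  gi G' ⊙ fP = fP ⊙ gi G /\
  (forall h : gt G' ⊙ (fP ⊙ pb1 (gt G) (gs G)) = gs G' ⊙ (fP ⊙ pb2 (gt G) (gs G)),
      gmu G' ⊙ pb_pair h = fP ⊙ gmu G).

Record GDHom (C : FinLimCategory) (G G' : GrpdData C) := MkGDH {
  hP : Hom (gP G) (gP G');
  hS : Hom (gS G) (gS G');
  hprop : is_gd_hom hP hS }.

Arguments MkGDH {C G G' hP hS} _.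

Lemma gdh_eq (C : FinLimCategory) (G G' : GrpdData C) (u v : GDHom G G') :
  hP u = hP v -> hS u = hS v -> u = v.
Proof.
case: u => a b pu; case: v => a' b' pv /= Ha Hb; subst.
by rewrite (proof_irrelevance _ pu pv).
Qed.

Lemma gd_hom_id (C : FinLimCategory) (G : GrpdData C) :
  is_gd_hom (idm (gP G)) (idm (gS G)).
Proof.
rewrite /is_gd_hom; do 4 (split; first by rewrite comp_idl comp_idr).
move=> h.
have -> : pb_pair h = idm _ by apply: pb_uniq; rewrite ?pb_pair1 ?pb_pair2 !comp_idr comp_idl.
by rewrite comp_idr comp_idl.
Qed.

Lemma gd_hom_comp (C : FinLimCategory) (G1 G2 G3 : GrpdData C)
  (g : GDHom G2 G3) (f : GDHom G1 G2) : is_gd_hom (hP g ⊙ hP f) (hS g ⊙ hS f).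
Proof.
case: g => gP' gS' [gs' [gt' [ge' [gi' gm']]]].
case: f => fP fS [fs [ft [fe [fi fm]]]] /=.
split; first by rewrite comp_assoc gs' -comp_assoc fs comp_assoc.
split; first by rewrite comp_assoc gt' -comp_assoc ft comp_assoc.
split; first by rewrite comp_assoc ge' -comp_assoc fe comp_assoc.
split; first by rewrite comp_assoc gi' -comp_assoc fi comp_assoc.
move=> h.
have H2 : gt G2 ⊙ (fP ⊙ pb1 (gt G1) (gs G1)) = gs G2 ⊙ (fP ⊙ pb2 (gt G1) (gs G1)).
  by rewrite !comp_assoc ft fs -!comp_assoc pb_comm.
have H3 : gt G3 ⊙ (gP' ⊙ pb1 (gt G2) (gs G2)) = gs G3 ⊙ (gP' ⊙ pb2 (gt G2) (gs G2)).
  by rewrite !comp_assoc gt' gs' -!comp_assoc pb_comm.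
have E : pb_pair h = pb_pair H3 ⊙ pb_pair H2.
  apply: pb_uniq.
  - by rewrite pb_pair1 comp_assoc pb_pair1 -!comp_assoc pb_pair1.
  - by rewrite pb_pair2 comp_assoc pb_pair2 -!comp_assoc pb_pair2.
by rewrite E comp_assoc gm' -comp_assoc fm comp_assoc.
Qed.

Record NT (C : Category) (P Q : OS C) := MkNT {
  nt :> forall n : nat, Hom (P n) (Q n);
  nt_nat : forall (m n : nat) (f : 'I_m.+1 -> 'I_n.+1),
      nt m ⊙ os_map P f = os_map Q f ⊙ nt n }.

Arguments MkNT {C P Q nt} _.

Lemma nt_eq (C : Category) (P Q : OS C) (a b : NT P Q) :
  (forall n, a n = b n) -> a = b.
Proof.
case: a => a pa; case: b => b pb' /= H.
have E : a = b by apply: functional_extensionality_dep.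
subst; by rewrite (proof_irrelevance _ pa pb').
Qed.

Lemma nt_id_nat (C : Category) (P : OS C) (m n : nat) (f : 'I_m.+1 -> 'I_n.+1) :
  idm (P m) ⊙ os_map P f = os_map P f ⊙ idm (P n).
Proof. by rewrite comp_idl comp_idr. Qed.

Lemma nt_comp_nat (C : Category) (P Q R : OS C) (b : NT Q R) (a : NT P Q)
  (m n : nat) (f : 'I_m.+1 -> 'I_n.+1) :
  (b m ⊙ a m) ⊙ os_map P f = os_map R f ⊙ (b n ⊙ a n).
Proof. by rewrite -comp_assoc nt_nat comp_assoc nt_nat -comp_assoc. Qed.

Definition OSCat (C : Category) : Category.
Proof.
refine (@Cat (OS C) (@NT C)
  (fun P => MkNT (@nt_id_nat C P))
  (fun P Q R b a => MkNT (nt_comp_nat b a)) _ _ _).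
- by move=> P Q f; apply: nt_eq => n /=; rewrite comp_idl.
- by move=> P Q f; apply: nt_eq => n /=; rewrite comp_idr.
- by move=> P Q R S h g f; apply: nt_eq => n /=; rewrite comp_assoc.
Defined.

Definition GDCat (C : FinLimCategory) : Category.
Proof.
refine (@Cat (GrpdData C) (@GDHom C)
  (fun G => MkGDH (gd_hom_id G))
  (fun G1 G2 G3 g f => MkGDH (gd_hom_comp g f)) _ _ _).
- by move=> G G' f; apply: gdh_eq => /=; rewrite comp_idl.
- by move=> G G' f; apply: gdh_eq => /=; rewrite comp_idr.
- by move=> A B C' D h g f; apply: gdh_eq => /=; rewrite comp_assoc.
Defined.

Definition FullSub (D : Category) (p : D -> Prop) : Category :=
  @Cat {x : D | p x} (fun x y => Hom (proj1_sig x) (proj1_sig y))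
    (fun x => idm (proj1_sig x)) (fun _ _ _ g f => g ⊙ f)
    (fun _ _ f => comp_idl f) (fun _ _ f => comp_idr f)
    (fun _ _ _ _ h g f => comp_assoc h g f).

Definition MultOS (C : FinLimCategory) : Category :=
  FullSub (@multiplicative C : OSCat C -> Prop).
Definition StrictMultOS (C : FinLimCategory) : Category :=
  FullSub (@strictly_multiplicative C : OSCat C -> Prop).
Definition Groupoids (C : FinLimCategory) : Category :=
  FullSub (@is_groupoid C : GDCat C -> Prop).
Definition Groups (C : FinLimCategory) : Category :=
  FullSub (@is_group C : GDCat C -> Prop).

Record Functor (D E : Category) := MkFun {
  fob :> D -> E;
  fhom : forall x y : D, Hom x y -> Hom (fob x) (fob y);
  fhom_id : forall x : D, fhom (idm x) = idm (fob x);
  fhom_comp : forall (x y z : D) (g : Hom y z) (f : Hom x y),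
      fhom (g ⊙ f) = fhom g ⊙ fhom f }.

Arguments fhom {D E} _ {x y} _.

Definition FunId (D : Category) : Functor D D :=
  @MkFun D D (fun x => x) (fun _ _ f => f) (fun _ => erefl) (fun _ _ _ _ _ => erefl).

Definition FunComp (D E F : Category) (G : Functor E F) (H : Functor D E) : Functor D F.
Proof.
refine (@MkFun D F (fun x => G (H x)) (fun _ _ f => fhom G (fhom H f)) _ _).
- by move=> x; rewrite !fhom_id.
- by move=> x y z g f; rewrite !fhom_comp.
Defined.

Definition nat_iso (D E : Category) (F G : Functor D E) : Prop :=
  exists a : forall x : D, Hom (F x) (G x),
    (forall (x y : D) (f : Hom x y), a y ⊙ fhom F f = fhom G f ⊙ a x) /\
    (forall x : D, is_iso (a x)).

Definition is_equivalence (D E : Category) (F : Functor D E) : Prop :=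
  exists G : Functor E D,
    nat_iso (FunId D) (FunComp G F) /\ nat_iso (FunComp F G) (FunId E).

Definition os_phi (C : FinLimCategory) (P : OS C) :
    Hom (P 2) (pb (os_map P t_map) (os_map P s_map)) :=
  pb_pair (os_square P (proj1 sq_pushout)).

Definition constr (C : FinLimCategory) (P : OS C) (hP : multiplicative P) : GrpdData C :=
  MkGD (P 1) (P 0) (os_map P s_map) (os_map P t_map) (os_map P e_map)
    (os_map P d_map ⊙ iso_inv (hP _ _ _ _ _ _ _ sq_pushout))
    (os_map P i_map).

Definition constrM (C : FinLimCategory) (P : MultOS C) : GrpdData C :=
  constr (proj2_sig P).

(* The functor of (2), given the facts that the construction lands in
   groupoids (hG, i.e. part (1)) and that natural transformations give
   groupoid morphisms (hH). *)
Definition Phi (C : FinLimCategory)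
  (hG : forall P : MultOS C, is_groupoid (constrM P))
  (hH : forall (P Q : MultOS C) (a : Hom P Q),
      is_gd_hom (G := constrM P) (G' := constrM Q) (nt a 1) (nt a 0)) :
  Functor (MultOS C) (Groupoids C).
Proof.
refine (@MkFun (MultOS C) (Groupoids C)
  (fun P => exist _ (constrM P) (hG P) : Groupoids C)
  (fun P Q a => MkGDH (hH P Q a)) _ _).
- by move=> P; apply: gdh_eq.
- by move=> P Q R g f; apply: gdh_eq.
Defined.

Definition strict_to_mult (C : FinLimCategory) (P : StrictMultOS C) : MultOS C :=
  exist _ (proj1_sig P) (proj1 (proj2_sig P)).

Lemma constr_group (C : FinLimCategory)
  (hG : forall P : MultOS C, is_groupoid (constrM P)) (P : StrictMultOS C) :
  is_group (constrM (strict_to_mult P)).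
Proof. split; [exact: hG | exact: (proj2 (proj2_sig P))]. Qed.

Definition PhiStrict (C : FinLimCategory)
  (hG : forall P : MultOS C, is_groupoid (constrM P))
  (hH : forall (P Q : MultOS C) (a : Hom P Q),
      is_gd_hom (G := constrM P) (G' := constrM Q) (nt a 1) (nt a 0)) :
  Functor (StrictMultOS C) (Groups C).
Proof.
refine (@MkFun (StrictMultOS C) (Groups C)
  (fun P => exist _ (constrM (strict_to_mult P)) (constr_group hG P) : Groups C)
  (fun P Q a => MkGDH (hH (strict_to_mult P) (strict_to_mult Q) a)) _ _).
- by move=> P; apply: gdh_eq.
- by move=> P Q R g f; apply: gdh_eq.
Defined.

(* Main.v *)
Require Import Defs.
From mathcomp Require Import all_boot.
From Stdlib Require Import ClassicalEpsilon ProofIrrelevance FunctionalExtensionality Classical.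
Set Implicit Arguments. Unset Strict Implicit. Unset Printing Implicit Defensive.

Lemma iso_invL (C : Category) (A B : C) (f : Hom A B) (h : is_iso f) :
  iso_inv h ⊙ f = idm A.
Proof. rewrite /iso_inv; by case: constructive_indefinite_description => g []. Qed.
Lemma iso_invR (C : Category) (A B : C) (f : Hom A B) (h : is_iso f) :
  f ⊙ iso_inv h = idm B.
Proof. rewrite /iso_inv; by case: constructive_indefinite_description => g []. Qed.

Lemma iso_epi (C : Category) (A B X : C) (f : Hom A B) (u v : Hom B X) :
  is_iso f -> u ⊙ f = v ⊙ f -> u = v.
Proof.
move=> [g [h1 h2]] E.
by rewrite -(comp_idr u) -(comp_idr v) -h2 !comp_assoc E.
Qed.
Lemma iso_mono (C : Category) (A B X : C) (f : Hom A B) (u v : Hom X A) :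
  is_iso f -> f ⊙ u = f ⊙ v -> u = v.
Proof.
move=> [g [h1 h2]] E.
by rewrite -(comp_idl u) -(comp_idl v) -h1 -!comp_assoc E.
Qed.

Lemma os_mapE (C : Category) (P : OS C) (k m n : nat) (f : 'I_k.+1 -> 'I_m.+1)
  (g : 'I_m.+1 -> 'I_n.+1) (h : 'I_k.+1 -> 'I_n.+1) :
  g \o f =1 h -> os_map P f ⊙ os_map P g = os_map P h.
Proof. move=> H; rewrite -os_comp; congr (os_map P _); exact: functional_extensionality H. Qed.

Lemma os_mapE1 (C : Category) (P : OS C) (m n : nat) (f g : 'I_m.+1 -> 'I_n.+1) :
  f =1 g -> os_map P f = os_map P g.
Proof. by move=> H; rewrite (functional_extensionality _ _ H). Qed.

Definition edge (n : nat) (a b : 'I_n.+1) : 'I_2 -> 'I_n.+1 :=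
  fun i => if val i == 0 then a else b.
Definition tri (n : nat) (a b c : 'I_n.+1) : 'I_3 -> 'I_n.+1 :=
  fun i => if val i == 0 then a else if val i == 1 then b else c.

Lemma ord2E (P : 'I_2 -> Prop) : P ord0 -> P ord_max -> forall i, P i.
Proof.
move=> H0 H1 [[|[|i]] Hi] //.
- by have -> : Ordinal Hi = ord0 by apply: val_inj.
- by have -> : Ordinal Hi = ord_max by apply: val_inj.
Qed.
Lemma ord1E (i : 'I_1) : i = ord0.
Proof. by apply: val_inj; case: i => [[|]]. Qed.

Definition mult_phi_iso (C : FinLimCategory) (P : OS C) (hP : multiplicative P) :
  is_iso (os_phi P) := hP _ _ _ _ _ _ _ sq_pushout.

Lemma mu_constr (C : FinLimCategory) (P : OS C) (hP : multiplicative P) :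
  gmu (constr hP) = os_map P d_map ⊙ iso_inv (mult_phi_iso hP).
Proof. by []. Qed.

Lemma edge_tri_incl n (a b c : 'I_n.+1) : tri a b c \o incl_map =1 edge a b.
Proof. by case=> [[|[|?]] ?]. Qed.
Lemma edge_tri_shift n (a b c : 'I_n.+1) : tri a b c \o shift_map =1 edge b c.
Proof. by case=> [[|[|?]] ?]. Qed.
Lemma edge_tri_d n (a b c : 'I_n.+1) : tri a b c \o d_map =1 edge a c.
Proof. case=> [[|[|?]] ?] //=; rewrite /tri /d_map /= inordK //. Qed.

Lemma edge_sq (C : Category) (P : OS C) n (a b c : 'I_n.+1) :
  os_map P t_map ⊙ os_map P (edge a b) = os_map P s_map ⊙ os_map P (edge b c).
Proof. by rewrite -!os_comp; congr (os_map P _); apply: functional_extensionality => i. Qed.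

Lemma comp_edge (C : FinLimCategory) (P : OS C) (hP : multiplicative P) n
  (a b c : 'I_n.+1) (h : os_map P t_map ⊙ os_map P (edge a b) = os_map P s_map ⊙ os_map P (edge b c)) :
  gmu (constr hP) ⊙ pb_pair h = os_map P (edge a c).
Proof.
have E : pb_pair h = os_phi P ⊙ os_map P (tri a b c).
  apply: pb_uniq; rewrite comp_assoc /os_phi ?pb_pair1 ?pb_pair2.
  - by symmetry; apply: os_mapE; apply: edge_tri_incl.
  - by symmetry; apply: os_mapE; apply: edge_tri_shift.
rewrite E mu_constr -comp_assoc (comp_assoc (iso_inv _)) iso_invL comp_idl.
by apply: os_mapE; apply: edge_tri_d.
Qed.

(* generic concatenation pushout: [0,n] glued at c with [0,1] at 0 *)
Definition glue_a (n : nat) (c : 'I_n.+1) : 'I_1 -> 'I_n.+1 := fun _ => c.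
Definition glue_f (n : nat) : 'I_n.+1 -> 'I_n.+2 := fun i => widen_ord (leqnSn _) i.
Definition glue_g (n : nat) (c : 'I_n.+1) : 'I_2 -> 'I_n.+2 :=
  edge (widen_ord (leqnSn _) c) ord_max.

Lemma glue_pushout (n : nat) (c : 'I_n.+1) :
  is_pushout_D (glue_a c) s_map (@glue_f n) (glue_g c).
Proof.
split; first by move=> i /=; rewrite /glue_g /edge /=.
move=> k u v huv.
exists (fun j : 'I_n.+2 => if (j < n.+1)%N then u (inord j) else v ord_max).
split; first split.
- move=> i /=; rewrite /glue_f /= ltn_ord.
  by congr u; apply: val_inj; rewrite /= inordK.
- apply: ord2E => /=.
  + rewrite /glue_g /edge /= ltn_ord.
    have := huv ord0; rewrite /glue_a /s_map /= => <-.
    by congr u; apply: val_inj; rewrite /= inordK.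
  + by rewrite /glue_g /edge /= ltnn.
- move=> w' h1 h2 j /=.
  case: ifP => hj.
  + rewrite -(h1 (inord j)) /=; congr w'; apply: val_inj; by rewrite /= inordK.
  + rewrite -(h2 ord_max) /glue_g /edge /=; congr w'; apply: val_inj => /=.
    by apply/eqP; rewrite eqn_leq -ltnS ltn_ord leqNgt hj.
Qed.

Lemma os_map_idE (C : Category) (P : OS C) (n : nat) (f : 'I_n.+1 -> 'I_n.+1) :
  f =1 id -> os_map P f = idm (P n).
Proof. by move=> H; rewrite (os_mapE1 P H) os_id. Qed.

Lemma os_mapE_id (C : Category) (P : OS C) (m n : nat) (f : 'I_m.+1 -> 'I_n.+1)
  (g : 'I_n.+1 -> 'I_m.+1) : g \o f =1 id -> os_map P f ⊙ os_map P g = idm (P m).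
Proof. by move=> H; rewrite (@os_mapE _ P _ _ _ f g id H) os_id. Qed.

Lemma compA_rw (C : Category) (A B D : C) (a : Hom B D) (b : Hom A B) (c : Hom A D) :
  a ⊙ b = c -> forall (Z : C) (z : Hom Z A), a ⊙ (b ⊙ z) = c ⊙ z.
Proof. by move=> <- Z z; rewrite comp_assoc. Qed.

Ltac ordt := case=> [[|[|[|[|?]]]] ?] //=; try (apply: val_inj; rewrite /= ?inordK //).

Lemma mu_pts (C : FinLimCategory) (P : OS C) (hP : multiplicative P) n
  (a b c : 'I_n.+1) (X : Hom (P n) (pb (os_map P t_map) (os_map P s_map))) :
  pb1 _ _ ⊙ X = os_map P (edge a b) -> pb2 _ _ ⊙ X = os_map P (edge b c) ->
  gmu (constr hP) ⊙ X = os_map P (edge a c).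
Proof.
move=> H1 H2.
have -> : X = pb_pair (edge_sq P a b c).
  by apply: pb_uniq; rewrite ?pb_pair1 ?pb_pair2.
exact: comp_edge.
Qed.

Lemma mu_pts' (C : FinLimCategory) (P : OS C) (hP : multiplicative P) n
  (a b c : 'I_n.+1) (X : Hom (P n) (pb (os_map P t_map) (os_map P s_map))) :
  pb1 _ _ ⊙ X = os_map P (edge a b) -> pb2 _ _ ⊙ X = os_map P (edge b c) ->
  os_map P d_map ⊙ (iso_inv (mult_phi_iso hP) ⊙ X) = os_map P (edge a c).
Proof. by move=> H1 H2; rewrite comp_assoc; exact: (mu_pts hP H1 H2). Qed.

Lemma part1 (C : FinLimCategory) (P : OS C) (hP : multiplicative P) :
  is_groupoid (constr hP).
Proof.
have phiI := mult_phi_iso hP.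
have phi1 : pb1 _ _ ⊙ os_phi P = os_map P incl_map by rewrite /os_phi pb_pair1.
have phi2 : pb2 _ _ ⊙ os_phi P = os_map P shift_map by rewrite /os_phi pb_pair2.
rewrite /is_groupoid /=.
have phiR : os_phi P ⊙ iso_inv (mult_phi_iso hP) = idm _ := iso_invR _.
have MP := mu_pts' hP.
move: phiR MP; rewrite /mult_phi_iso; set phinv := iso_inv _ => phiR MP; clearbody phinv.
split.
  split; first by apply: os_mapE_id => i; rewrite [i]ord1E.
  split; first by apply: os_mapE_id => i; rewrite [i]ord1E.
  split.
    rewrite comp_assoc (@os_mapE _ P _ _ _ _ _ (incl_map \o s_map)) //; last by ordt.
    by rewrite os_comp -phi1 -!comp_assoc phiR comp_idr.
  split.
    rewrite comp_assoc (@os_mapE _ P _ _ _ _ _ (shift_map \o t_map)) //; last by ordt.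
    by rewrite os_comp -phi2 -!comp_assoc phiR comp_idr.
  by split; apply: os_mapE; ordt.
split.
  move=> h1 hyz h2.
  pose a3 : 'I_1 -> 'I_3 := glue_a (ord_max : 'I_3).
  have H3 := glue_pushout (ord_max : 'I_3).
  have MI := hP _ _ _ _ _ _ _ H3.
  set M := pb_pair (os_square P (proj1 H3)) in MI.
  have hr : os_map P (glue_a (ord_max : 'I_3)) ⊙ (phinv ⊙ pb1 _ _) =
            os_map P s_map ⊙ pb2 (os_map P t_map ⊙ pb2 (os_map P t_map) (os_map P s_map)) (os_map P s_map).
    rewrite -pb_comm -(@os_mapE _ P _ _ _ t_map shift_map (glue_a (ord_max : 'I_3))); last by ordt.
    by rewrite -phi2 -!comp_assoc (comp_assoc (os_phi P)) phiR comp_idl.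
  pose rho := iso_inv MI ⊙ pb_pair hr.
  have hpsi : (os_map P t_map ⊙ pb2 (os_map P t_map) (os_map P s_map)) ⊙ (os_phi P ⊙ os_map P (@glue_f 2))
     = os_map P s_map ⊙ os_map P (glue_g (ord_max : 'I_3)).
    rewrite -!comp_assoc (comp_assoc _ (os_phi P)) phi2 -!os_comp; apply: os_mapE1; ordt.
  pose psi := pb_pair hpsi.
  have psirho : psi ⊙ rho = idm _.
    apply: pb_uniq; rewrite comp_idr comp_assoc ?pb_pair1 ?pb_pair2.
    - have -> : os_map P (@glue_f 2) = pb1 _ _ ⊙ M by rewrite /M pb_pair1.
      rewrite /rho -!comp_assoc (compA_rw (iso_invR MI)) comp_idl pb_pair1.
      by rewrite (compA_rw phiR) comp_idl.
    - have -> : os_map P (glue_g (ord_max : 'I_3)) = pb2 _ _ ⊙ M by rewrite /M pb_pair2.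
      by rewrite /rho -!comp_assoc (compA_rw (iso_invR MI)) comp_idl pb_pair2.
  rewrite -(comp_idr (_ ⊙ pb_pair h1)) -(comp_idr (_ ⊙ pb_pair h2)) -psirho !comp_assoc.
  congr (_ ⊙ iso_inv MI ⊙ pb_pair hr).
  have E01 : pb1 _ _ ⊙ (os_phi P ⊙ os_map P (@glue_f 2)) = os_map P (edge (ord0 : 'I_4) (inord 1)).
    by rewrite comp_assoc phi1 -os_comp; apply: os_mapE1; ordt.
  have E12 : pb2 _ _ ⊙ (os_phi P ⊙ os_map P (@glue_f 2)) = os_map P (edge (inord 1 : 'I_4) (inord 2)).
    by rewrite comp_assoc phi2 -os_comp; apply: os_mapE1; ordt.
  have E23 : os_map P (glue_g (ord_max : 'I_3)) = os_map P (edge (inord 2 : 'I_4) (inord 3)).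
    by apply: os_mapE1; rewrite /glue_g /edge; ordt.
  rewrite -!comp_assoc (MP 3 ord0 (inord 2) (inord 3)).
  - symmetry; rewrite -!comp_assoc (MP 3 ord0 (inord 1) (inord 3)) //.
    + by rewrite comp_assoc pb_pair1 -comp_assoc /psi pb_pair1 E01.
    + rewrite comp_assoc pb_pair2 -!comp_assoc (MP 3 (inord 1) (inord 2) (inord 3)) //.
      * by rewrite comp_assoc pb_pair1 -comp_assoc /psi pb_pair1 E12.
      * by rewrite comp_assoc pb_pair2 /psi pb_pair2 E23.
  - rewrite comp_assoc pb_pair1 -!comp_assoc /psi pb_pair1.
    by rewrite (MP 3 ord0 (inord 1) (inord 2)).
  - by rewrite comp_assoc pb_pair2 /psi pb_pair2 E23.
split.
  move=> h; rewrite -comp_assoc (MP 1 ord0 ord0 ord_max).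
  - by apply: os_map_idE; ordt.
  - by rewrite pb_pair1 -os_comp; apply: os_mapE1; ordt.
  - by rewrite pb_pair2; symmetry; apply: os_map_idE; ordt.
split.
  move=> h; rewrite -comp_assoc (MP 1 ord0 ord_max ord_max).
  - by apply: os_map_idE; ordt.
  - by rewrite pb_pair1; symmetry; apply: os_map_idE; ordt.
  - by rewrite pb_pair2 -os_comp; apply: os_mapE1; ordt.
split.
  move=> h; rewrite -comp_assoc (MP 1 ord0 ord_max ord0).
  - by rewrite -os_comp; apply: os_mapE1; ordt.
  - by rewrite pb_pair1; symmetry; apply: os_map_idE; ordt.
  - by rewrite pb_pair2; apply: os_mapE1; ordt.
move=> h; rewrite -comp_assoc (MP 1 ord_max ord0 ord_max).
- by rewrite -os_comp; apply: os_mapE1; ordt.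
- by rewrite pb_pair1; apply: os_mapE1; ordt.
- by rewrite pb_pair2; symmetry; apply: os_map_idE; ordt.
Qed.

Definition gc (C : FinLimCategory) (G : GrpdData C) (W : C) (x y : Hom W (gP G)) : Hom W (gP G) :=
  match excluded_middle_informative (gt G ⊙ x = gs G ⊙ y) with
  | left h => gmu G ⊙ pb_pair h
  | right _ => x end.

Lemma gcE (C : FinLimCategory) (G : GrpdData C) (W : C) (x y : Hom W (gP G))
  (h : gt G ⊙ x = gs G ⊙ y) : gc x y = gmu G ⊙ pb_pair h.
Proof.
rewrite /gc; case: excluded_middle_informative => [h'|//].
by rewrite (proof_irrelevance _ h h').
Qed.

Lemma mu_gc (C : FinLimCategory) (G : GrpdData C) (W : C) (X : Hom W (pb (gt G) (gs G))) :
  gmu G ⊙ X = gc (pb1 _ _ ⊙ X) (pb2 _ _ ⊙ X).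
Proof.
have h : gt G ⊙ (pb1 _ _ ⊙ X) = gs G ⊙ (pb2 _ _ ⊙ X) by rewrite !comp_assoc pb_comm.
rewrite (gcE h); congr (_ ⊙ _); apply: pb_uniq; by rewrite ?pb_pair1 ?pb_pair2.
Qed.

Lemma gc_comp (C : FinLimCategory) (G : GrpdData C) (W V : C) (x y : Hom W (gP G)) (m : Hom V W) :
  gt G ⊙ x = gs G ⊙ y -> gc x y ⊙ m = gc (x ⊙ m) (y ⊙ m).
Proof.
move=> h; have h' : gt G ⊙ (x ⊙ m) = gs G ⊙ (y ⊙ m) by rewrite !comp_assoc h.
by rewrite (gcE h) (gcE h') -comp_assoc (pb_pair_comp h h').
Qed.


Lemma gax (C : FinLimCategory) (G : GrpdData C) : is_groupoid G ->
  [/\ gs G ⊙ ge G = idm (gS G), gt G ⊙ ge G = idm (gS G),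
      gs G ⊙ gmu G = gs G ⊙ pb1 _ _, gt G ⊙ gmu G = gt G ⊙ pb2 _ _ &
      (gs G ⊙ gi G = gt G /\ gt G ⊙ gi G = gs G)].
Proof. by case=> [[? [? [? [? [? ?]]]]] _]. Qed.

Lemma gax2 (C : FinLimCategory) (G : GrpdData C) : is_groupoid G ->
  (forall h : gt G ⊙ (ge G ⊙ gs G) = gs G ⊙ idm (gP G), gmu G ⊙ pb_pair h = idm (gP G)) /\
  (forall h : gt G ⊙ idm (gP G) = gs G ⊙ (ge G ⊙ gt G), gmu G ⊙ pb_pair h = idm (gP G)) /\
  (forall h : gt G ⊙ idm (gP G) = gs G ⊙ gi G, gmu G ⊙ pb_pair h = ge G ⊙ gs G) /\
  (forall h : gt G ⊙ gi G = gs G ⊙ idm (gP G), gmu G ⊙ pb_pair h = ge G ⊙ gt G).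
Proof. by case=> _ [_ H]. Qed.

Lemma gax_assoc (C : FinLimCategory) (G : GrpdData C) : is_groupoid G ->
  let s := gs G in let t := gt G in let mu := gmu G in
  let p1 := pb1 t s in let p2 := pb2 t s in
  let r1 := pb1 (t ⊙ p2) s in let r2 := pb2 (t ⊙ p2) s in
  (forall (h1 : t ⊙ (mu ⊙ r1) = s ⊙ r2) (hyz : t ⊙ (p2 ⊙ r1) = s ⊙ r2)
          (h2 : t ⊙ (p1 ⊙ r1) = s ⊙ (mu ⊙ pb_pair hyz)),
      mu ⊙ pb_pair h1 = mu ⊙ pb_pair h2).
Proof. by case=> _ [H _]. Qed.

Lemma gs_gc (C : FinLimCategory) (G : GrpdData C) (hG : is_groupoid G) (W : C) (x y : Hom W (gP G)) :
  gt G ⊙ x = gs G ⊙ y -> gs G ⊙ gc x y = gs G ⊙ x.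
Proof.
case/gax: hG => _ _ smu _ _ h.
by rewrite (gcE h) comp_assoc smu -comp_assoc pb_pair1.
Qed.

Lemma gt_gc (C : FinLimCategory) (G : GrpdData C) (hG : is_groupoid G) (W : C) (x y : Hom W (gP G)) :
  gt G ⊙ x = gs G ⊙ y -> gt G ⊙ gc x y = gt G ⊙ y.
Proof.
case/gax: hG => _ _ _ tmu _ h.
by rewrite (gcE h) comp_assoc tmu -comp_assoc pb_pair2.
Qed.

Lemma gs_e (C : FinLimCategory) (G : GrpdData C) (hG : is_groupoid G) (W : C) (o : Hom W (gS G)) :
  gs G ⊙ (ge G ⊙ o) = o.
Proof. by case/gax: hG => se _ _ _ _; rewrite comp_assoc se comp_idl. Qed.
Lemma gt_e (C : FinLimCategory) (G : GrpdData C) (hG : is_groupoid G) (W : C) (o : Hom W (gS G)) :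
  gt G ⊙ (ge G ⊙ o) = o.
Proof. by case/gax: hG => _ te _ _ _; rewrite comp_assoc te comp_idl. Qed.
Lemma gs_i (C : FinLimCategory) (G : GrpdData C) (hG : is_groupoid G) (W : C) (x : Hom W (gP G)) :
  gs G ⊙ (gi G ⊙ x) = gt G ⊙ x.
Proof. by case/gax: hG => _ _ _ _ [si _]; rewrite comp_assoc si. Qed.
Lemma gt_i (C : FinLimCategory) (G : GrpdData C) (hG : is_groupoid G) (W : C) (x : Hom W (gP G)) :
  gt G ⊙ (gi G ⊙ x) = gs G ⊙ x.
Proof. by case/gax: hG => _ _ _ _ [_ ti]; rewrite comp_assoc ti. Qed.

Lemma gc_unitl (C : FinLimCategory) (G : GrpdData C) (hG : is_groupoid G) (W : C) (x : Hom W (gP G)) :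
  gc (ge G ⊙ (gs G ⊙ x)) x = x.
Proof.
have [ul _] := gax2 hG.
have h : gt G ⊙ (ge G ⊙ gs G) = gs G ⊙ idm (gP G).
  by case/gax: hG => _ te _ _ _; rewrite comp_assoc te comp_idl comp_idr.
transitivity (gmu G ⊙ pb_pair h ⊙ x); last by rewrite (ul h) comp_idl.
by rewrite -comp_assoc mu_gc !comp_assoc pb_pair1 pb_pair2 comp_idl.
Qed.

Lemma gc_unitr (C : FinLimCategory) (G : GrpdData C) (hG : is_groupoid G) (W : C) (x : Hom W (gP G)) :
  gc x (ge G ⊙ (gt G ⊙ x)) = x.
Proof.
have [_ [ur _]] := gax2 hG.
have h : gt G ⊙ idm (gP G) = gs G ⊙ (ge G ⊙ gt G).
  by case/gax: hG => se _ _ _ _; rewrite comp_assoc se comp_idl comp_idr.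
transitivity (gmu G ⊙ pb_pair h ⊙ x); last by rewrite (ur h) comp_idl.
by rewrite -comp_assoc mu_gc !comp_assoc pb_pair1 pb_pair2 comp_idl.
Qed.

Lemma gc_invr (C : FinLimCategory) (G : GrpdData C) (hG : is_groupoid G) (W : C) (x : Hom W (gP G)) :
  gc x (gi G ⊙ x) = ge G ⊙ (gs G ⊙ x).
Proof.
have [_ [_ [ir _]]] := gax2 hG.
have h : gt G ⊙ idm (gP G) = gs G ⊙ gi G.
  by case/gax: hG => _ _ _ _ [si _]; rewrite si comp_idr.
transitivity (gmu G ⊙ pb_pair h ⊙ x); last by rewrite (ir h) comp_assoc.
by rewrite -comp_assoc mu_gc !comp_assoc pb_pair1 pb_pair2 comp_idl.
Qed.

Lemma gc_invl (C : FinLimCategory) (G : GrpdData C) (hG : is_groupoid G) (W : C) (x : Hom W (gP G)) :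
  gc (gi G ⊙ x) x = ge G ⊙ (gt G ⊙ x).
Proof.
have [_ [_ [_ il]]] := gax2 hG.
have h : gt G ⊙ gi G = gs G ⊙ idm (gP G).
  by case/gax: hG => _ _ _ _ [_ ti]; rewrite ti comp_idr.
transitivity (gmu G ⊙ pb_pair h ⊙ x); last by rewrite (il h) comp_assoc.
by rewrite -comp_assoc mu_gc !comp_assoc pb_pair1 pb_pair2 comp_idl.
Qed.

Lemma gc_assoc (C : FinLimCategory) (G : GrpdData C) (hG : is_groupoid G) (W : C)
  (x y z : Hom W (gP G)) :
  gt G ⊙ x = gs G ⊙ y -> gt G ⊙ y = gs G ⊙ z -> gc (gc x y) z = gc x (gc y z).
Proof.
move=> hxy hyz0.
have [_ _ smu tmu _] := gax hG.
have A := gax_assoc hG; rewrite /= in A.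
set t := gt G in A hxy hyz0 tmu *; set s := gs G in A hxy hyz0 smu *.
have hyz : t ⊙ (pb2 t s ⊙ pb1 (t ⊙ pb2 t s) s) = s ⊙ pb2 (t ⊙ pb2 t s) s.
  by rewrite comp_assoc pb_comm.
have h1 : t ⊙ (gmu G ⊙ pb1 (t ⊙ pb2 t s) s) = s ⊙ pb2 (t ⊙ pb2 t s) s.
  by rewrite comp_assoc tmu -comp_assoc hyz.
have h2 : t ⊙ (pb1 t s ⊙ pb1 (t ⊙ pb2 t s) s) = s ⊙ (gmu G ⊙ pb_pair hyz).
  by rewrite !comp_assoc smu -!comp_assoc pb_pair1 !comp_assoc pb_comm.
have hw : (t ⊙ pb2 t s) ⊙ pb_pair hxy = s ⊙ z by rewrite -comp_assoc pb_pair2.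
have E := A h1 hyz h2.
have := congr1 (fun u => u ⊙ pb_pair hw) E.
rewrite -!comp_assoc mu_gc !comp_assoc pb_pair1 pb_pair2 -!comp_assoc pb_pair1 (gcE hxy).
rewrite mu_gc !pb_pair1 !pb_pair2 => ->.
rewrite mu_gc !comp_assoc pb_pair1 pb_pair2 -!comp_assoc pb_pair1 pb_pair1 mu_gc.
by rewrite !comp_assoc pb_pair1 pb_pair2 -!comp_assoc pb_pair1 pb_pair2 pb_pair2.
Qed.

Ltac st hG := rewrite ?(gs_e hG) ?(gt_e hG) ?(gs_i hG) ?(gt_i hG).

Lemma inv_uniq (C : FinLimCategory) (G : GrpdData C) (hG : is_groupoid G) (W : C)
  (x y : Hom W (gP G)) :
  gt G ⊙ x = gs G ⊙ y -> gc x y = ge G ⊙ (gs G ⊙ x) -> y = gi G ⊙ x.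
Proof.
move=> hxy E.
rewrite -(gc_unitl hG y) -hxy -(gc_invl hG x) gc_assoc //; last by st hG.
by rewrite E -(gt_i hG x) gc_unitr.
Qed.

Lemma inv_inv (C : FinLimCategory) (G : GrpdData C) (hG : is_groupoid G) (W : C)
  (x : Hom W (gP G)) : gi G ⊙ (gi G ⊙ x) = x.
Proof.
symmetry; apply: (inv_uniq hG) => //; first by st hG.
by rewrite gc_invl; st hG.
Qed.

Lemma inv_e (C : FinLimCategory) (G : GrpdData C) (hG : is_groupoid G) (W : C)
  (o : Hom W (gS G)) : gi G ⊙ (ge G ⊙ o) = ge G ⊙ o.
Proof.
symmetry; apply: (inv_uniq hG) => //; first by st hG.
by st hG; rewrite -{1}(gs_e hG o) gc_unitl.
Qed.

Lemma inv_gc (C : FinLimCategory) (G : GrpdData C) (hG : is_groupoid G) (W : C)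
  (x y : Hom W (gP G)) :
  gt G ⊙ x = gs G ⊙ y -> gi G ⊙ gc x y = gc (gi G ⊙ y) (gi G ⊙ x).
Proof.
move=> hxy; symmetry; apply: (inv_uniq hG).
  by rewrite (gt_gc hG) // (gs_gc hG); st hG => //; rewrite hxy.
have h1 : gt G ⊙ y = gs G ⊙ (gi G ⊙ y) by st hG.
have h2 : gt G ⊙ (gi G ⊙ y) = gs G ⊙ (gi G ⊙ x) by st hG; rewrite hxy.
have E1 : gc y (gc (gi G ⊙ y) (gi G ⊙ x)) = gi G ⊙ x.
  rewrite -(gc_assoc hG h1 h2) gc_invr // -hxy -(gs_i hG x) gc_unitl //.
rewrite (gc_assoc hG hxy); last by rewrite (gs_gc hG).
by rewrite E1 gc_invr // (gs_gc hG).
Qed.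

Lemma gc_cancel (C : FinLimCategory) (G : GrpdData C) (hG : is_groupoid G) (W : C)
  (A D : Hom W (gP G)) : gs G ⊙ A = gs G ⊙ D -> gc A (gc (gi G ⊙ A) D) = D.
Proof.
move=> hAD.
have h1 : gt G ⊙ A = gs G ⊙ (gi G ⊙ A) by st hG.
have h2 : gt G ⊙ (gi G ⊙ A) = gs G ⊙ D by st hG.
by rewrite -(gc_assoc hG h1 h2) (gc_invr hG) hAD (gc_unitl hG).
Qed.

Lemma gc_ID (C : FinLimCategory) (G : GrpdData C) (hG : is_groupoid G) (W : C)
  (A B D : Hom W (gP G)) : gs G ⊙ A = gs G ⊙ B -> gs G ⊙ A = gs G ⊙ D ->
  gc (gi G ⊙ gc (gi G ⊙ A) B) (gc (gi G ⊙ A) D) = gc (gi G ⊙ B) D.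
Proof.
move=> hAB hAD.
rewrite (inv_gc hG); last by st hG.
rewrite inv_inv // (gc_assoc hG); first by rewrite gc_cancel.
- by st hG.
- by rewrite (gs_gc hG); st hG => //; rewrite -hAB hAD.
Qed.

Lemma gc_coh (C : FinLimCategory) (G : GrpdData C) (hG : is_groupoid G) (W : C)
  (A B D : Hom W (gP G)) : gs G ⊙ A = gs G ⊙ B -> gs G ⊙ A = gs G ⊙ D ->
  gc (gc (gi G ⊙ A) B) (gc (gi G ⊙ B) D) = gc (gi G ⊙ A) D.
Proof.
move=> hAB hAD.
rewrite (gc_assoc hG).
- by rewrite (gc_cancel hG) // -hAB.
- by st hG.
- by rewrite (gs_gc hG); st hG => //; rewrite -hAB hAD.
Qed.

Fixpoint NB (C : FinLimCategory) (G : GrpdData C) (n : nat) : {X : Ob C & Hom X (gS G)} :=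
  match n with
  | 0 => existT (fun X => Hom X (gS G)) (gS G) (idm (gS G))
  | n'.+1 => existT (fun X => Hom X (gS G)) (pb (projT2 (NB G n')) (gs G))
                 (projT2 (NB G n') ⊙ pb1 (projT2 (NB G n')) (gs G))
  end.
Definition Nob (C : FinLimCategory) (G : GrpdData C) (n : nat) : Ob C := projT1 (NB G n).
Definition base (C : FinLimCategory) (G : GrpdData C) (n : nat) : Hom (Nob G n) (gS G) :=
  projT2 (NB G n).

Fixpoint arr (C : FinLimCategory) (G : GrpdData C) (n : nat) : nat -> Hom (Nob G n) (gP G) :=
  match n with
  | 0 => fun _ => ge G
  | n'.+1 => fun j => if j == n'.+1 then pb2 (base G n') (gs G)
                      else arr G n' j ⊙ pb1 (base G n') (gs G)
  end.

Lemma arr_s (C : FinLimCategory) (G : GrpdData C) (hG : is_groupoid G) n j :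
  gs G ⊙ arr G n j = base G n.
Proof.
elim: n j => [|n IH] j /=.
  by case/gax: hG.
case: eqP => _; first by rewrite -pb_comm.
by rewrite comp_assoc IH.
Qed.

Lemma arr0 (C : FinLimCategory) (G : GrpdData C) n : arr G n 0 = ge G ⊙ base G n.
Proof.
elim: n => [|n IH] /=; first by rewrite /base /= comp_idr.
by rewrite IH -comp_assoc.
Qed.

Lemma N_mono (C : FinLimCategory) (G : GrpdData C) n (W : C) (u v : Hom W (Nob G n)) :
  base G n ⊙ u = base G n ⊙ v -> (forall j, 0 < j <= n -> arr G n j ⊙ u = arr G n j ⊙ v) ->
  u = v.
Proof.
elim: n u v => [|n IH] u v Hb Ha.
  by move: Hb; rewrite /base /= !comp_idl.
apply: pb_uniq.
- apply: IH.
  + by move: Hb; rewrite /base /= -!comp_assoc.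
  + move=> j /andP [j0 jn]; have := Ha j; rewrite /= ifN_eq; last by rewrite neq_ltn ltnS jn.
    by rewrite -!comp_assoc => ->//; rewrite j0 /= ltnW.
- by have := Ha n.+1; rewrite /= eqxx => ->.
Qed.

Lemma N_ex (C : FinLimCategory) (G : GrpdData C) n (W : C) (x0 : Hom W (gS G))
  (y : nat -> Hom W (gP G)) : (forall j, gs G ⊙ y j = x0) ->
  {u : Hom W (Nob G n) | base G n ⊙ u = x0 /\ forall j, 0 < j <= n -> arr G n j ⊙ u = y j}.
Proof.
move=> Hy; elim: n => [|n [u [Hb Ha]]].
  by exists x0; split => [|[|j]] //; rewrite /base /= comp_idl.
have h : base G n ⊙ u = gs G ⊙ y n.+1 by rewrite Hb Hy.
exists (pb_pair h); split.
  by rewrite /base /= -comp_assoc pb_pair1.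
move=> j /andP [j0 jn] /=; case: eqP => [->|ne]; first by rewrite pb_pair2.
rewrite -comp_assoc pb_pair1 Ha // j0 /= -ltnS ltn_neqAle jn andbT.
by apply/eqP.
Qed.

Definition Ed (C : FinLimCategory) (G : GrpdData C) n (a b : nat) : Hom (Nob G n) (gP G) :=
  gc (gi G ⊙ arr G n a) (arr G n b).

Lemma Ed_valid (C : FinLimCategory) (G : GrpdData C) (hG : is_groupoid G) n a b :
  gt G ⊙ (gi G ⊙ arr G n a) = gs G ⊙ arr G n b.
Proof. by rewrite (gt_i hG) !(arr_s hG). Qed.

Lemma Ed_s (C : FinLimCategory) (G : GrpdData C) (hG : is_groupoid G) n a b :
  gs G ⊙ Ed G n a b = gt G ⊙ arr G n a.
Proof. by rewrite /Ed (gs_gc hG) ?(gs_i hG) //; apply: Ed_valid. Qed.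
Lemma Ed_t (C : FinLimCategory) (G : GrpdData C) (hG : is_groupoid G) n a b :
  gt G ⊙ Ed G n a b = gt G ⊙ arr G n b.
Proof. by rewrite /Ed (gt_gc hG) //; apply: Ed_valid. Qed.

Lemma Ed0 (C : FinLimCategory) (G : GrpdData C) (hG : is_groupoid G) n b :
  Ed G n 0 b = arr G n b.
Proof. by rewrite /Ed arr0 (inv_e hG) -(arr_s hG n b) (gc_unitl hG). Qed.

Lemma Ed_comp (C : FinLimCategory) (G : GrpdData C) (hG : is_groupoid G) n a b
  (W : C) (u : Hom W (Nob G n)) :
  Ed G n a b ⊙ u = gc (gi G ⊙ (arr G n a ⊙ u)) (arr G n b ⊙ u).
Proof. by rewrite /Ed (gc_comp _ (Ed_valid hG n a b)) comp_assoc. Qed.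

Lemma N_monoE (C : FinLimCategory) (G : GrpdData C) (hG : is_groupoid G) n (W : C)
  (u v : Hom W (Nob G n)) :
  (forall j k : 'I_n.+1, Ed G n j k ⊙ u = Ed G n j k ⊙ v) -> u = v.
Proof.
move=> H; apply: N_mono.
  have := H ord0 ord0; rewrite /= (Ed0 hG) -(arr_s hG n 0) -!comp_assoc => ->//.
move=> j /andP [_ jn]; have := H ord0 (@Ordinal n.+1 j jn); by rewrite /= (Ed0 hG).
Qed.

Definition build (C : FinLimCategory) (G : GrpdData C) n (W : C) (x0 : Hom W (gS G))
  (y : nat -> Hom W (gP G)) (h : forall j, gs G ⊙ y j = x0) : Hom W (Nob G n) :=
  proj1_sig (N_ex n h).

Lemma build_base (C : FinLimCategory) (G : GrpdData C) n (W : C) (x0 : Hom W (gS G))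
  (y : nat -> Hom W (gP G)) (h : forall j, gs G ⊙ y j = x0) : base G n ⊙ build n h = x0.
Proof. exact: (proj1 (proj2_sig (N_ex n h))). Qed.
Lemma build_arr (C : FinLimCategory) (G : GrpdData C) n (W : C) (x0 : Hom W (gS G))
  (y : nat -> Hom W (gP G)) (h : forall j, gs G ⊙ y j = x0) j :
  0 < j <= n -> arr G n j ⊙ build n h = y j.
Proof. exact: (proj2 (proj2_sig (N_ex n h)) j). Qed.

Lemma Nmap_h (C : FinLimCategory) (G : GrpdData C) (hG : is_groupoid G) m n
  (f : 'I_m.+1 -> 'I_n.+1) :
  forall j, gs G ⊙ (fun j => Ed G n (f ord0) (f (inord j))) j = gt G ⊙ arr G n (f ord0).
Proof. by move=> j; rewrite (Ed_s hG). Qed.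

Definition Nmap (C : FinLimCategory) (G : GrpdData C) (hG : is_groupoid G) m n
  (f : 'I_m.+1 -> 'I_n.+1) : Hom (Nob G n) (Nob G m) :=
  build m (Nmap_h hG f).

Lemma Nmap_arr (C : FinLimCategory) (G : GrpdData C) (hG : is_groupoid G) m n
  (f : 'I_m.+1 -> 'I_n.+1) (j : 'I_m.+1) :
  arr G m j ⊙ Nmap hG f = Ed G n (f ord0) (f j).
Proof.
case: (posnP j) => j0.
  have -> : j = ord0 by apply: val_inj.
  by rewrite arr0 -comp_assoc /Nmap build_base /Ed (gc_invl hG).
rewrite /Nmap build_arr; last by rewrite j0 -ltnS ltn_ord.
by congr (Ed _ _ _ (f _)); apply: val_inj; rewrite /= inordK.
Qed.

Lemma Nmap_E (C : FinLimCategory) (G : GrpdData C) (hG : is_groupoid G) m n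
  (f : 'I_m.+1 -> 'I_n.+1) (j k : 'I_m.+1) :
  Ed G m j k ⊙ Nmap hG f = Ed G n (f j) (f k).
Proof.
rewrite (Ed_comp hG) !Nmap_arr /Ed (gc_ID hG) //; by rewrite !(arr_s hG).
Qed.

Lemma Nmap_id (C : FinLimCategory) (G : GrpdData C) (hG : is_groupoid G) n :
  Nmap hG (@id 'I_n.+1) = idm (Nob G n).
Proof. by apply: (N_monoE hG) => j k; rewrite Nmap_E comp_idr. Qed.

Lemma Nmap_comp (C : FinLimCategory) (G : GrpdData C) (hG : is_groupoid G) (k m n : nat)
  (f : 'I_k.+1 -> 'I_m.+1) (g : 'I_m.+1 -> 'I_n.+1) :
  Nmap hG (g \o f) = Nmap hG f ⊙ Nmap hG g.
Proof. by apply: (N_monoE hG) => j l; rewrite comp_assoc !Nmap_E. Qed.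

Definition Nerve (C : FinLimCategory) (G : GrpdData C) (hG : is_groupoid G) : OS C :=
  @MkOS C (Nob G) (fun m n f => Nmap hG f) (Nmap_id hG) (Nmap_comp hG).

Lemma Nmap0 (C : FinLimCategory) (G : GrpdData C) (hG : is_groupoid G) n
  (f : 'I_1 -> 'I_n.+1) : Nmap hG f = gt G ⊙ arr G n (f ord0).
Proof. by have := build_base 0 (Nmap_h hG f); rewrite /base /= comp_idl. Qed.

Lemma gc_ID' (C : FinLimCategory) (G : GrpdData C) (hG : is_groupoid G) n (W : C)
  (u : Hom W (Nob G n)) a j k :
  gc (gi G ⊙ (Ed G n a j ⊙ u)) (Ed G n a k ⊙ u) = Ed G n j k ⊙ u.
Proof.
rewrite !(Ed_comp hG) (gc_ID hG) //; by rewrite !comp_assoc !(arr_s hG).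
Qed.

Lemma star (C : FinLimCategory) (G : GrpdData C) (hG : is_groupoid G) n (W : C)
  (o : Hom W (gS G)) (r : 'I_n.+1 -> Hom W (gP G)) : (forall z, gs G ⊙ r z = o) ->
  {w : Hom W (Nob G n) | forall z z' : 'I_n.+1, Ed G n z z' ⊙ w = gc (gi G ⊙ r z) (r z')}.
Proof.
move=> hr.
have h : forall j, gs G ⊙ (fun j => gc (gi G ⊙ r ord0) (r (inord j))) j = gt G ⊙ r ord0.
  by move=> j /=; rewrite (gs_gc hG) ?(gs_i hG) // (gt_i hG) !hr.
exists (build n h) => z z'.
have HA : forall j : 'I_n.+1, arr G n j ⊙ build n h = gc (gi G ⊙ r ord0) (r j).
  move=> j; case: (posnP j) => j0.
    have -> : j = ord0 by apply: val_inj.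
    by rewrite arr0 -comp_assoc build_base (gc_invl hG).
  rewrite build_arr; last by rewrite j0 -ltnS ltn_ord.
  by congr (gc _ (r _)); apply: val_inj; rewrite /= inordK.
rewrite (Ed_comp hG) !HA (gc_ID hG) //; by rewrite !hr.
Qed.

Definition ind2 (c : bool) : 'I_2 := if c then ord_max else ord0.

Lemma ind2_inj c d : ind2 c = ind2 d -> c = d.
Proof. by case: c; case: d => // /(congr1 val). Qed.

Lemma po_finj m l n (a : 'I_1 -> 'I_m.+1) (b : 'I_1 -> 'I_l.+1) f g :
  @is_pushout_D m l n a b f g -> injective f.
Proof.
move=> [_ H] i i' E.
have [w [[h1 _] _]] := H 1 (fun x => ind2 (x == i)) (fun _ => ind2 (a ord0 == i))
  (fun y => ltac:(by rewrite /= [y]ord1E)).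
have := h1 i; have := h1 i'; rewrite /= E => -> /ind2_inj.
by rewrite eqxx => /eqP.
Qed.

Lemma po_ginj m l n (a : 'I_1 -> 'I_m.+1) (b : 'I_1 -> 'I_l.+1) f g :
  @is_pushout_D m l n a b f g -> injective g.
Proof.
move=> [_ H] j j' E.
have [w [[_ h2] _]] := H 1 (fun _ => ind2 (b ord0 == j)) (fun x => ind2 (x == j))
  (fun y => ltac:(by rewrite /= [y]ord1E)).
have := h2 j; have := h2 j'; rewrite /= E => -> /ind2_inj.
by rewrite eqxx => /eqP.
Qed.

Lemma po_meet m l n (a : 'I_1 -> 'I_m.+1) (b : 'I_1 -> 'I_l.+1) f g :
  @is_pushout_D m l n a b f g -> forall i j, f i = g j -> i = a ord0 /\ j = b ord0.
Proof.
move=> [_ H] i j E; split.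
  have [w [[h1 h2] _]] := H 1 (fun x => ind2 (x == i)) (fun _ => ind2 (a ord0 == i))
    (fun y => ltac:(by rewrite /= [y]ord1E)).
  have := h2 j; have := h1 i; rewrite /= E => -> /ind2_inj.
  by rewrite eqxx => /esym/eqP ->.
have [w [[h1 h2] _]] := H 1 (fun _ => ind2 (b ord0 == j)) (fun x => ind2 (x == j))
  (fun y => ltac:(by rewrite /= [y]ord1E)).
have := h1 i; have := h2 j; rewrite /= -E => -> /ind2_inj.
by rewrite eqxx => /esym/eqP ->.
Qed.

Lemma po_surj m l n (a : 'I_1 -> 'I_m.+1) (b : 'I_1 -> 'I_l.+1) f g :
  @is_pushout_D m l n a b f g -> forall z, (exists i, f i = z) \/ (exists j, g j = z).
Proof.
move=> [_ H] z; apply: NNPP => nz.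
have nf : forall i, f i != z by move=> i; apply/eqP => E; apply: nz; left; exists i.
have ng : forall j, g j != z by move=> j; apply/eqP => E; apply: nz; right; exists j.
have [w [_ U]] := H 1 (fun _ => ord0) (fun _ => ord0) (fun _ => erefl).
have U0 := U (fun _ => ord0) (fun _ => erefl) (fun _ => erefl) z.
have U1 := U (fun x => ind2 (x == z)) (fun i => ltac:(by rewrite /= (negbTE (nf i))))
  (fun j => ltac:(by rewrite /= (negbTE (ng j)))) z.
by move: U1; rewrite /= eqxx -U0.
Qed.

Lemma nerve_mult_aux (C : FinLimCategory) (G : GrpdData C) (hG : is_groupoid G)
  m l n (a : 'I_1 -> 'I_m.+1) (b : 'I_1 -> 'I_l.+1) f g (H : @is_pushout_D m l n a b f g)
  (e : Nmap hG a ⊙ Nmap hG f = Nmap hG b ⊙ Nmap hG g) : is_iso (pb_pair e).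
Proof.
set p1 := pb1 (Nmap hG a) (Nmap hG b); set p2 := pb2 (Nmap hG a) (Nmap hG b).
have hpb : (gt G ⊙ arr G m (a ord0)) ⊙ p1 = (gt G ⊙ arr G l (b ord0)) ⊙ p2.
  by rewrite -!Nmap0 /p1 /p2 pb_comm.
pose r (z : 'I_n.+1) : Hom (pb (Nmap hG a) (Nmap hG b)) (gP G) :=
  match [pick i | f i == z] with
  | Some i => Ed G m (a ord0) i ⊙ p1
  | None => match [pick j | g j == z] with
            | Some j => Ed G l (b ord0) j ⊙ p2
            | None => Ed G l (b ord0) (b ord0) ⊙ p2 end end.
have hr : forall z, gs G ⊙ r z = gt G ⊙ arr G m (a ord0) ⊙ p1.
  move=> z; rewrite /r; case: pickP => [i _|_]; first by rewrite comp_assoc (Ed_s hG).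
  by case: pickP => [j _|_]; rewrite comp_assoc (Ed_s hG) hpb.
have rf : forall i, r (f i) = Ed G m (a ord0) i ⊙ p1.
  move=> i; rewrite /r; case: pickP => [i' /eqP E|]; first by rewrite (po_finj H E).
  by move/(_ i); rewrite eqxx.
have rg : forall j, r (g j) = Ed G l (b ord0) j ⊙ p2.
  move=> j; rewrite /r; case: pickP => [i /eqP E|_].
    have [-> ->] := po_meet H E.
    have hpb' : gt G ⊙ (arr G m (a ord0) ⊙ p1) = gt G ⊙ (arr G l (b ord0) ⊙ p2).
      by rewrite !comp_assoc.
    by rewrite /Ed !(gc_invl hG) -!comp_assoc hpb'.
  case: pickP => [j' /eqP E|]; first by rewrite (po_ginj H E).
  by move/(_ j); rewrite eqxx.
have [w hw] := star hG hr.
have rpp : forall z, r z ⊙ pb_pair e = Ed G n (f (a ord0)) z ⊙ idm _.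
  move=> z; rewrite comp_idr; case: (po_surj H z) => [[i <-]|[j <-]].
    by rewrite rf -comp_assoc /p1 pb_pair1 Nmap_E.
  by rewrite rg -comp_assoc /p2 pb_pair2 Nmap_E; have /= -> := proj1 H ord0.
exists w; split.
  apply: (N_monoE hG) => z z'.
  rewrite comp_assoc hw (gc_comp _); last by rewrite (gt_i hG) !hr.
  by rewrite -comp_assoc !rpp (gc_ID' hG).
apply: pb_uniq.
  rewrite comp_assoc pb_pair1 comp_idr; apply: (N_monoE hG) => j k.
  by rewrite comp_assoc Nmap_E hw !rf (gc_ID' hG).
rewrite comp_assoc pb_pair2 comp_idr; apply: (N_monoE hG) => j k.
by rewrite comp_assoc Nmap_E hw !rg (gc_ID' hG).
Qed.

Lemma nerve_mult (C : FinLimCategory) (G : GrpdData C) (hG : is_groupoid G) :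
  multiplicative (Nerve hG).
Proof.
move=> m l n a b f g H.
exact: (@nerve_mult_aux C G hG m l n a b f g H (os_square (Nerve hG) (proj1 H))).
Qed.

Lemma nerve_strict (C : FinLimCategory) (G : GrpdData C) (hG : is_groupoid G) :
  gs G = gt G -> strictly_multiplicative (Nerve hG).
Proof.
move=> st; split; first exact: nerve_mult.
rewrite /= !Nmap0 /s_map /t_map /= (gt_e hG) -st -pb_comm.
by rewrite /base /= comp_idl.
Qed.

Lemma hom_gc (C : FinLimCategory) (G G' : GrpdData C) (fP : Hom (gP G) (gP G')) fS
  (hf : is_gd_hom fP fS) (W : C) (x y : Hom W (gP G)) :
  gt G ⊙ x = gs G ⊙ y -> fP ⊙ gc x y = gc (fP ⊙ x) (fP ⊙ y).
Proof.
case: hf => hs [ht [he [hi hm]]] hxy.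
have h : gt G' ⊙ (fP ⊙ pb1 (gt G) (gs G)) = gs G' ⊙ (fP ⊙ pb2 (gt G) (gs G)).
  by rewrite !comp_assoc ht hs -!comp_assoc pb_comm.
rewrite (gcE hxy) comp_assoc -hm -comp_assoc mu_gc !comp_assoc.
by rewrite !pb_pair1 !pb_pair2 -!comp_assoc !pb_pair1 !pb_pair2.
Qed.

Lemma Nhom_h (C : FinLimCategory) (G G' : GrpdData C) (hG : is_groupoid G)
  (fP : Hom (gP G) (gP G')) fS (hf : is_gd_hom fP fS) n :
  forall j, gs G' ⊙ (fun j => fP ⊙ arr G n j) j = fS ⊙ base G n.
Proof. by case: hf => hs _ j /=; rewrite comp_assoc hs -comp_assoc (arr_s hG). Qed.

Definition Ncomp (C : FinLimCategory) (G G' : GrpdData C) (hG : is_groupoid G)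
  (fP : Hom (gP G) (gP G')) fS (hf : is_gd_hom fP fS) n : Hom (Nob G n) (Nob G' n) :=
  build n (Nhom_h hG hf n).

Lemma Ncomp_arr (C : FinLimCategory) (G G' : GrpdData C) (hG : is_groupoid G)
  (fP : Hom (gP G) (gP G')) fS (hf : is_gd_hom fP fS) n (j : 'I_n.+1) :
  arr G' n j ⊙ Ncomp hG hf n = fP ⊙ arr G n j.
Proof.
case: (posnP j) => j0.
  rewrite j0 !arr0 -comp_assoc /Ncomp build_base comp_assoc.
  by case: hf => _ [_ [-> _]]; rewrite -comp_assoc.
by rewrite /Ncomp build_arr // j0 -ltnS ltn_ord.
Qed.

Lemma Ncomp_E (C : FinLimCategory) (G G' : GrpdData C) (hG : is_groupoid G)
  (hG' : is_groupoid G')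
  (fP : Hom (gP G) (gP G')) fS (hf : is_gd_hom fP fS) n (j k : 'I_n.+1) :
  Ed G' n j k ⊙ Ncomp hG hf n = fP ⊙ Ed G n j k.
Proof.
rewrite (Ed_comp hG') !Ncomp_arr /Ed (hom_gc hf); last by apply: Ed_valid.
by case: hf => _ [_ [_ [hi _]]]; rewrite !comp_assoc hi.
Qed.

Lemma Ncomp_nat (C : FinLimCategory) (G G' : GrpdData C) (hG : is_groupoid G)
  (hG' : is_groupoid G')
  (fP : Hom (gP G) (gP G')) fS (hf : is_gd_hom fP fS) (m n : nat) (f : 'I_m.+1 -> 'I_n.+1) :
  Ncomp hG hf m ⊙ os_map (Nerve hG) f = os_map (Nerve hG') f ⊙ Ncomp hG hf n.
Proof.
apply: (N_monoE hG') => j k /=.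
by rewrite !comp_assoc (Ncomp_E hG hG') Nmap_E -comp_assoc Nmap_E (Ncomp_E hG hG').
Qed.

Definition NNT (C : FinLimCategory) (G G' : GrpdData C) (hG : is_groupoid G)
  (hG' : is_groupoid G') (u : GDHom G G') : NT (Nerve hG) (Nerve hG') :=
  @MkNT C (Nerve hG) (Nerve hG') (fun n => Ncomp hG (hprop u) n) (Ncomp_nat hG hG' (hprop u)).

Lemma NNT_id (C : FinLimCategory) (G : GrpdData C) (hG : is_groupoid G) :
  NNT hG hG (MkGDH (gd_hom_id G)) = @MkNT _ _ _ _ (@nt_id_nat C (Nerve hG)).
Proof.
apply: nt_eq => n /=; apply: (N_monoE hG) => j k.
by rewrite (Ncomp_E hG hG) comp_idl comp_idr.
Qed.

Lemma NNT_comp (C : FinLimCategory) (G1 G2 G3 : GrpdData C) (h1 : is_groupoid G1)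
  (h2 : is_groupoid G2) (h3 : is_groupoid G3) (v : GDHom G2 G3) (u : GDHom G1 G2) :
  NNT h1 h3 (MkGDH (gd_hom_comp v u)) = MkNT (nt_comp_nat (NNT h2 h3 v) (NNT h1 h2 u)).
Proof.
apply: nt_eq => n /=; apply: (N_monoE h3) => j k.
by rewrite (Ncomp_E h1 h3) comp_assoc (Ncomp_E h2 h3) -!comp_assoc (Ncomp_E h1 h2).
Qed.

Definition c0 (n : nat) : 'I_1 -> 'I_n.+1 := fun _ => ord0.

Lemma alpha_h (C : FinLimCategory) (P : OS C) (hP : multiplicative P) n :
  forall j, gs (constr hP) ⊙ (fun j => os_map P (edge ord0 (inord j : 'I_n.+1))) j =
            os_map P (c0 n).
Proof. by move=> j /=; apply: os_mapE => x. Qed.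

Definition alpha (C : FinLimCategory) (P : OS C) (hP : multiplicative P) n :
  Hom (P n) (Nob (constr hP) n) := build n (alpha_h hP n).

Lemma alpha_base (C : FinLimCategory) (P : OS C) (hP : multiplicative P) n :
  base (constr hP) n ⊙ alpha hP n = os_map P (c0 n).
Proof. exact: build_base. Qed.

Lemma alpha_arr (C : FinLimCategory) (P : OS C) (hP : multiplicative P) n (j : 'I_n.+1) :
  arr (constr hP) n j ⊙ alpha hP n = os_map P (edge ord0 j).
Proof.
case: (posnP j) => j0.
  rewrite j0 arr0 -comp_assoc alpha_base /=; apply: os_mapE => x.
  by apply: val_inj; rewrite /edge /=; case: ifP => //= _; rewrite j0.
rewrite /alpha build_arr; last by rewrite j0 -ltnS ltn_ord.
by apply: os_mapE1 => x; rewrite /edge inord_val.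
Qed.

Lemma gc_edge (C : FinLimCategory) (P : OS C) (hP : multiplicative P) n (a b c : 'I_n.+1) :
  gc (G := constr hP) (os_map P (edge a b)) (os_map P (edge b c)) = os_map P (edge a c).
Proof. by rewrite (gcE (G := constr hP) (edge_sq P a b c)) comp_edge. Qed.

Lemma alpha_E (C : FinLimCategory) (P : OS C) (hP : multiplicative P) n (j k : 'I_n.+1) :
  Ed (constr hP) n j k ⊙ alpha hP n = os_map P (edge j k).
Proof.
rewrite (Ed_comp (part1 hP)) !alpha_arr.
have -> : gi (constr hP) ⊙ os_map P (edge ord0 j) = os_map P (edge j ord0).
  by rewrite /=; apply: os_mapE; case=> [[|[|?]] ?].
exact: gc_edge.
Qed.

Lemma alpha_nat (C : FinLimCategory) (P : OS C) (hP : multiplicative P) (m n : nat)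
  (f : 'I_m.+1 -> 'I_n.+1) :
  alpha hP m ⊙ os_map P f = os_map (Nerve (part1 hP)) f ⊙ alpha hP n.
Proof.
apply: (N_monoE (part1 hP)) => j k /=.
rewrite comp_assoc alpha_E comp_assoc Nmap_E alpha_E; apply: os_mapE.
by move=> x; rewrite /edge /=; case: ifP.
Qed.

Lemma iso_idm (C : Category) (A : C) : is_iso (idm A).
Proof. by exists (idm A); rewrite comp_idl. Qed.

Lemma iso_comp (C : Category) (A B D : C) (f : Hom A B) (g : Hom B D) :
  is_iso f -> is_iso g -> is_iso (g ⊙ f).
Proof.
move=> [f' [f1 f2]] [g' [g1 g2]]; exists (f' ⊙ g'); split.
  by rewrite -comp_assoc (comp_assoc g') g1 comp_idl.
by rewrite -comp_assoc (comp_assoc f) f2 comp_idl.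
Qed.

Lemma pb_iso1 (C : FinLimCategory) (X X' Y Z : C) (f : Hom X Z) (g : Hom Y Z) (f' : Hom X' Z)
  (phi : Hom X X') (e : f' ⊙ (phi ⊙ pb1 f g) = g ⊙ pb2 f g) :
  is_iso phi -> f' ⊙ phi = f -> is_iso (pb_pair e).
Proof.
move=> [psi [p1 p2]] hf.
have hf' : f ⊙ psi = f' by rewrite -hf -comp_assoc p2 comp_idr.
have e' : f ⊙ (psi ⊙ pb1 f' g) = g ⊙ pb2 f' g by rewrite comp_assoc hf' pb_comm.
exists (pb_pair e'); split; apply: pb_uniq; rewrite ?comp_idr comp_assoc ?pb_pair1 ?pb_pair2.
all: try by rewrite -comp_assoc pb_pair1 comp_assoc ?p1 ?p2 comp_idl.
all: try by rewrite ?pb_pair2.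
Qed.

Lemma alpha_iso (C : FinLimCategory) (P : OS C) (hP : multiplicative P) n :
  is_iso (alpha hP n).
Proof.
elim: n => [|n IH].
  have -> : alpha hP 0 = idm _.
    have := alpha_base hP 0; rewrite /base /= comp_idl => ->.
    by apply: os_map_idE => x; rewrite [x]ord1E [c0 _ _]ord1E.
  exact: iso_idm.
have H := glue_pushout (ord0 : 'I_n.+1).
have MI := hP _ _ _ _ _ _ _ H.
set M := pb_pair (os_square P (proj1 H)) in MI.
have hb : base (constr hP) n ⊙ alpha hP n = os_map P (glue_a (ord0 : 'I_n.+1)) by apply: alpha_base.
have e : base (constr hP) n ⊙ (alpha hP n ⊙ pb1 (os_map P (glue_a (ord0 : 'I_n.+1))) (os_map P s_map))
       = gs (constr hP) ⊙ pb2 (os_map P (glue_a (ord0 : 'I_n.+1))) (os_map P s_map).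
  by rewrite comp_assoc hb pb_comm.
have -> : alpha hP n.+1 = (pb_pair e : Hom _ (Nob (constr hP) n.+1)) ⊙ M.
  apply: N_mono.
    rewrite alpha_base; change (base (constr hP) n.+1) with
      (base (constr hP) n ⊙ pb1 (base (constr hP) n) (gs (constr hP))).
    rewrite -!comp_assoc (compA_rw (pb_pair1 e)) -!comp_assoc (compA_rw hb) /M pb_pair1.
    by symmetry; apply: os_mapE => x; apply: val_inj.
  move=> j /andP [j0 jn].
  rewrite /alpha build_arr; last by rewrite j0 jn.
  rewrite /=; case: eqP => [Ej|Ej].
    rewrite comp_assoc pb_pair2 /M pb_pair2; apply: os_mapE1 => x.
    by rewrite /glue_g /edge Ej; apply: val_inj; case: ifP => //= _; rewrite inordK.
  have jn' : j <= n by rewrite -ltnS ltn_neqAle jn andbT; apply/eqP.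
  have ha : arr (constr hP) n j ⊙ alpha hP n = os_map P (edge ord0 (inord j)).
    by rewrite /alpha build_arr // j0.
  rewrite -!comp_assoc (compA_rw (pb_pair1 e)) -!comp_assoc (compA_rw ha) /M pb_pair1 -os_comp.
  apply: os_mapE1 => x; apply: val_inj; rewrite /edge /=; case: ifP => //= _.
  by rewrite !inordK // ltnS // ltnW.
apply: iso_comp => //; apply: pb_iso1 => //.
Qed.

Lemma gd_hom_of_nt (C : FinLimCategory) (P Q : OS C) (hP : multiplicative P)
  (hQ : multiplicative Q) (a : NT P Q) :
  is_gd_hom (G := constr hP) (G' := constr hQ) (a 1) (a 0).
Proof.
rewrite /is_gd_hom /=; split; first by rewrite nt_nat.
split; first by rewrite nt_nat.
split; first by rewrite nt_nat.
split; first by rewrite nt_nat.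
move=> h; apply: (iso_epi (mult_phi_iso hP)).
have E : pb_pair h ⊙ os_phi P = os_phi Q ⊙ a 2.
  apply: pb_uniq; rewrite !comp_assoc ?pb_pair1 ?pb_pair2 /os_phi ?pb_pair1 ?pb_pair2.
  - by rewrite -!comp_assoc pb_pair1 nt_nat.
  - by rewrite -!comp_assoc pb_pair2 nt_nat.
rewrite -!comp_assoc E (compA_rw (iso_invL _)) comp_idl iso_invL comp_idr.
by rewrite nt_nat.
Qed.

Lemma conj_inv (C : Category) (A B A' B' : C) (fP : Hom A B) (g : Hom B A)
  (fS : Hom A' B') (k : Hom B' A') (X : Hom A A') (Y : Hom B B') :
  fP ⊙ g = idm B -> k ⊙ fS = idm A' -> Y ⊙ fP = fS ⊙ X -> X ⊙ g = k ⊙ Y.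
Proof.
move=> h1 h2 E.
transitivity (k ⊙ fS ⊙ X ⊙ g); first by rewrite h2 comp_idl.
by rewrite -(comp_assoc k) -E comp_assoc -(comp_assoc _ fP) h1 comp_idr.
Qed.

Lemma gdhom_inv (C : FinLimCategory) (G G' : GrpdData C) (fP : Hom (gP G) (gP G'))
  (fS : Hom (gS G) (gS G')) (g : Hom (gP G') (gP G)) (k : Hom (gS G') (gS G)) :
  is_gd_hom fP fS -> g ⊙ fP = idm _ -> fP ⊙ g = idm _ -> k ⊙ fS = idm _ -> fS ⊙ k = idm _ ->
  is_gd_hom g k.
Proof.
move=> [hs [ht [he [hi hm]]]] g1 g2 k1 k2.
split; first exact: conj_inv g2 k1 hs.
split; first exact: conj_inv g2 k1 ht.
split; first exact: conj_inv k2 g1 he.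
split; first exact: conj_inv g2 g1 hi.
move=> h.
apply: (@iso_mono _ _ _ _ fP); first by exists g.
have h' : gt G' ⊙ (fP ⊙ pb1 (gt G) (gs G)) = gs G' ⊙ (fP ⊙ pb2 (gt G) (gs G)).
  by rewrite !comp_assoc ht hs -!comp_assoc pb_comm.
rewrite comp_assoc -(hm h') (comp_assoc fP g) g2 comp_idl -comp_assoc.
have -> : pb_pair h' ⊙ pb_pair h = idm _.
  apply: pb_uniq; rewrite comp_idr comp_assoc ?pb_pair1 ?pb_pair2 -comp_assoc.
  - by rewrite pb_pair1 comp_assoc g2 comp_idl.
  - by rewrite pb_pair2 comp_assoc g2 comp_idl.
by rewrite comp_idr.
Qed.

Lemma gdhom_iso (C : FinLimCategory) (G G' : Groupoids C) (u : Hom G G') :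
  is_iso (hP u) -> is_iso (hS u) -> is_iso u.
Proof.
move=> [g [g1 g2]] [k [k1 k2]].
have hv := gdhom_inv (hprop u) g1 g2 k1 k2.
exists (MkGDH hv : Hom G' G); split; apply: gdh_eq => //=.
Qed.

Lemma gdhom_iso' (C : FinLimCategory) (G G' : Groups C) (u : Hom G G') :
  is_iso (hP u) -> is_iso (hS u) -> is_iso u.
Proof.
move=> [g [g1 g2]] [k [k1 k2]].
have hv := gdhom_inv (hprop u) g1 g2 k1 k2.
exists (MkGDH hv : Hom G' G); split; apply: gdh_eq => //=.
Qed.

Lemma nt_iso (C : FinLimCategory) (P Q : OS C) (a : NT P Q) :
  (forall n, is_iso (a n)) -> is_iso (C := OSCat C) a.
Proof.
move=> H.
have nat' : forall (m n : nat) (f : 'I_m.+1 -> 'I_n.+1),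
    iso_inv (H m) ⊙ os_map Q f = os_map P f ⊙ iso_inv (H n).
  move=> m n f; symmetry; apply: conj_inv (iso_invR (H n)) (iso_invL (H m)) _.
  exact: esym (nt_nat a f).
exists (MkNT nat'); split; apply: nt_eq => n /=; [exact: iso_invL | exact: iso_invR].
Qed.

Lemma beta_mu (C : FinLimCategory) (G : GrpdData C) (hG : is_groupoid G)
  (h : gt G ⊙ (arr G 1 1 ⊙ pb1 (gt (constr (nerve_mult hG))) (gs (constr (nerve_mult hG)))) =
       gs G ⊙ (arr G 1 1 ⊙ pb2 (gt (constr (nerve_mult hG))) (gs (constr (nerve_mult hG))))) :
  gmu G ⊙ pb_pair h = arr G 1 1 ⊙ gmu (constr (nerve_mult hG)).
Proof.
have phiI := mult_phi_iso (nerve_mult hG).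
apply: (iso_epi phiI).
rewrite mu_constr -!comp_assoc iso_invL comp_idr.
change (os_map (Nerve hG) d_map) with (Nmap hG d_map).
rewrite (Nmap_arr hG d_map ord_max).
rewrite mu_gc !comp_assoc pb_pair1 pb_pair2 -!comp_assoc /os_phi pb_pair1 pb_pair2.
change (os_map (Nerve hG) incl_map) with (Nmap hG incl_map).
change (os_map (Nerve hG) shift_map) with (Nmap hG shift_map).
rewrite (Nmap_arr hG incl_map ord_max) (Nmap_arr hG shift_map ord_max).
rewrite /Ed (gc_coh hG); last 2 first.
- by rewrite !(arr_s hG).
- by rewrite !(arr_s hG).
by rewrite /d_map /= !inordK.
Qed.

Lemma beta_hom (C : FinLimCategory) (G : GrpdData C) (hG : is_groupoid G) :
  is_gd_hom (G := constr (nerve_mult hG)) (G' := G) (arr G 1 1) (idm (gS G)).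
Proof.
rewrite /is_gd_hom /=.
split; first by rewrite comp_idl Nmap0 /= (gt_e hG) -pb_comm /base /= comp_idl.
split; first by rewrite comp_idl Nmap0.
split.
  have := Nmap_arr hG e_map ord_max; rewrite /= => ->.
  by rewrite /Ed /= (gc_invl hG); case/gax: (hG) => _ -> _ _ _.
split.
  have := Nmap_arr hG i_map ord_max; rewrite /= => ->.
  rewrite /Ed /=.
  have -> : pb1 (base G 0) (gs G) = gt G ⊙ (gi G ⊙ pb2 (base G 0) (gs G)).
    by rewrite (gt_i hG) -pb_comm /base /= comp_idl.
  by rewrite (gc_unitr hG).
exact: beta_mu.
Qed.

Lemma beta_iso (C : FinLimCategory) (G : GrpdData C) : is_iso (arr G 1 1).
Proof.
have ev : base G 0 ⊙ gs G = gs G ⊙ idm (gP G) by rewrite /base /= comp_idl comp_idr.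
exists (pb_pair ev : Hom (gP G) (Nob G 1)); split; last by rewrite /= pb_pair2.
apply: pb_uniq; rewrite /= comp_idr comp_assoc ?pb_pair1 ?pb_pair2 ?comp_idl //.
by rewrite -pb_comm /base /= comp_idl.
Qed.

Lemma alpha_nat' (C : FinLimCategory) (P : OS C) (hP : multiplicative P)
  (hG : is_groupoid (constr hP)) (m n : nat) (f : 'I_m.+1 -> 'I_n.+1) :
  alpha hP m ⊙ os_map P f = os_map (Nerve hG) f ⊙ alpha hP n.
Proof. rewrite (proof_irrelevance _ hG (part1 hP)); exact: alpha_nat. Qed.

Definition alphaNT (C : FinLimCategory) (P : OS C) (hP : multiplicative P)
  (hG : is_groupoid (constr hP)) : NT P (Nerve hG) := @MkNT C P (Nerve hG) (alpha hP) (@alpha_nat' C P hP hG).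

Lemma alpha_natural (C : FinLimCategory) (P Q : OS C) (hP : multiplicative P)
  (hQ : multiplicative Q) (hGP : is_groupoid (constr hP)) (hGQ : is_groupoid (constr hQ))
  (a : NT P Q) (hh : is_gd_hom (G := constr hP) (G' := constr hQ) (a 1) (a 0)) n :
  alpha hQ n ⊙ a n = Ncomp hGP hh n ⊙ alpha hP n.
Proof.
apply: (N_monoE hGQ) => j k.
rewrite comp_assoc alpha_E comp_assoc (Ncomp_E hGP hGQ) -comp_assoc alpha_E.
by rewrite nt_nat.
Qed.

Lemma beta_hom' (C : FinLimCategory) (G : GrpdData C) (hG : is_groupoid G)
  (hN : multiplicative (Nerve hG)) :
  is_gd_hom (G := constr hN) (G' := G) (arr G 1 1) (idm (gS G)).
Proof. rewrite (proof_irrelevance _ hN (nerve_mult hG)); exact: beta_hom. Qed.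

Lemma Ncomp0 (C : FinLimCategory) (G G' : GrpdData C) (hG : is_groupoid G)
  (fP : Hom (gP G) (gP G')) fS (hf : is_gd_hom fP fS) : Ncomp hG hf 0 = fS.
Proof.
have H := build_base 0 (Nhom_h hG hf 0).
transitivity (base G' 0 ⊙ Ncomp hG hf 0); first by rewrite /base /= comp_idl.
by rewrite /Ncomp H /base /= comp_idr.
Qed.

Lemma Ncomp1 (C : FinLimCategory) (G G' : GrpdData C) (hG : is_groupoid G)
  (fP : Hom (gP G) (gP G')) fS (hf : is_gd_hom fP fS) :
  arr G' 1 1 ⊙ Ncomp hG hf 1 = fP ⊙ arr G 1 1.
Proof. exact: (Ncomp_arr hG hf (ord_max : 'I_2)). Qed.

Definition Psi (C : FinLimCategory) : Functor (Groupoids C) (MultOS C).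
Proof.
refine (@MkFun (Groupoids C) (MultOS C)
  (fun X => exist _ (Nerve (proj2_sig X)) (nerve_mult (proj2_sig X)) : MultOS C)
  (fun X Y u => NNT (proj2_sig X) (proj2_sig Y) u) _ _).
- by move=> X; exact: NNT_id.
- by move=> X Y Z g f; exact: NNT_comp.
Defined.

Definition PsiS (C : FinLimCategory) : Functor (Groups C) (StrictMultOS C).
Proof.
refine (@MkFun (Groups C) (StrictMultOS C)
  (fun X => exist _ (Nerve (proj1 (proj2_sig X)))
     (nerve_strict (proj1 (proj2_sig X)) (proj2 (proj2_sig X))) : StrictMultOS C)
  (fun X Y u => NNT (proj1 (proj2_sig X)) (proj1 (proj2_sig Y)) u) _ _).
- by move=> X; exact: NNT_id.
- by move=> X Y Z g f; exact: NNT_comp.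
Defined.

Definition hGf (C : FinLimCategory) : forall P : MultOS C, is_groupoid (constrM P) :=
  fun P : MultOS C => @part1 C (proj1_sig P) (proj2_sig P).
Definition hHf (C : FinLimCategory) : forall (P Q : MultOS C) (a : Hom P Q),
    is_gd_hom (G := constrM P) (G' := constrM Q) (nt a 1) (nt a 0) :=
  fun (P Q : MultOS C) (a : Hom P Q) =>
    @gd_hom_of_nt C (proj1_sig P) (proj1_sig Q) (proj2_sig P) (proj2_sig Q) a.

Lemma equiv1 (C : FinLimCategory) : is_equivalence (Phi (@hGf C) (@hHf C)).
Proof.
exists (Psi C); split.
- exists (fun X : MultOS C => @alphaNT C (proj1_sig X) (proj2_sig X) (@hGf C X)); split.
    move=> X Y f; apply: nt_eq => n /=.
    exact: (@alpha_natural C _ _ (proj2_sig X) (proj2_sig Y) (hGf X) (hGf Y) f (hHf f)).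
  move=> X; apply: nt_iso => n; exact: alpha_iso.
- exists (fun X : Groupoids C => MkGDH (@beta_hom' C (proj1_sig X) (proj2_sig X) (nerve_mult (proj2_sig X)))); split.
    move=> X Y u; apply: gdh_eq => /=.
      by rewrite Ncomp1.
    by rewrite Ncomp0 comp_idl comp_idr.
  move=> X; apply: gdhom_iso => /=; [exact: beta_iso | exact: iso_idm].
Qed.

Lemma equiv2 (C : FinLimCategory) : is_equivalence (PhiStrict (@hGf C) (@hHf C)).
Proof.
exists (PsiS C); split.
- exists (fun X : StrictMultOS C => @alphaNT C (proj1_sig X) (proj1 (proj2_sig X)) (proj1 (constr_group (@hGf C) X))); split.
    move=> X Y f; apply: nt_eq => n /=.
    exact: (@alpha_natural C _ _ (proj1 (proj2_sig X)) (proj1 (proj2_sig Y))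
      (proj1 (constr_group (@hGf C) X)) (proj1 (constr_group (@hGf C) Y)) f
      (@hHf C (strict_to_mult X) (strict_to_mult Y) f)).
  move=> X; apply: nt_iso => n; exact: alpha_iso.
- exists (fun X : Groups C => MkGDH (@beta_hom' C (proj1_sig X) (proj1 (proj2_sig X))
                  (proj1 (nerve_strict (proj1 (proj2_sig X)) (proj2 (proj2_sig X)))))); split.
    move=> X Y u; apply: gdh_eq => /=.
      by rewrite Ncomp1.
    by rewrite Ncomp0 comp_idl comp_idr.
  move=> X; apply: gdhom_iso' => /=; [exact: beta_iso | exact: iso_idm].
Qed.

Theorem mainTheorem2 (C : FinLimCategory) :
  (forall (P : OS C) (hP : multiplicative P), is_groupoid (constr hP)) /\
  exists (hG : forall P : MultOS C, is_groupoid (constrM P))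
         (hH : forall (P Q : MultOS C) (a : Hom P Q),
             is_gd_hom (G := constrM P) (G' := constrM Q) (nt a 1) (nt a 0)),
    is_equivalence (Phi hG hH) /\ is_equivalence (PhiStrict hG hH).
Proof.
split; first exact: part1.
exists (@hGf C), (@hHf C); split; [exact: equiv1 | exact: equiv2].
Qed.
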